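(* Let $M=25$ and let $\beta$, $P_M$, $Q_M$ be as defined below. Then $\beta(t,\gamma)\ge0$ for all $t\ge0$, $\gamma\ge0$, and $P_M(t)-Q_M(t)\ge0$ for all $t\ge0$.
   Context: Define rational functions $c_0=\frac1{\xi+10}$, $d_0=\frac{\xi+23}{(\xi+13)(\xi+10)}$ and, for $j\ge1$, $(c_j,d_j)^T=N_j(c_{j-1},d_{j-1})^T$ with $N_j=\begin{pmatrix}8j+10+\xi&0\\-13&8j+13+\xi\end{pmatrix}^{-1}\begin{pmatrix}8(j-1)&10\\0&8(j-1)\end{pmatrix}$. Let $(\mathring c_j,\mathring d_j)=\mathfrak F^{-1}\big(\frac1{d_0}(c_j,d_j)\big)$ for $j\ge1$ ($\mathfrak F^{-1}$ = inverse Laplace transform), $P_M=8M\mathring c_M+10\mathring d_M$, $Q_M=8M\mathring d_M$. Let $\mathring w_1,\mathring w_2$ solve $\partial_t\mathring w_1-4\gamma\partial_\gamma\mathring w_1+10\mathring w_1-\frac{10}{1+\gamma^2}\mathring w_2=130e^{-23t}$, $\partial_t\mathring w_2-4\gamma\partial_\gamma\mathring w_2+13\mathring w_2-13\mathring w_1=130e^{-23t}$ with $\mathring w_1(0)=-10\frac{\gamma^2}{1+\gamma^2}$, $\mathring w_2(0)=0$, and $\beta:=\mathring w_2-\sum_{j=1}^M\mathring d_j(t)(1+\gamma^2)^{-j}$. *)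

(* Defs.v *)
From Stdlib Require Import Reals.
From Coquelicot Require Import Coquelicot.
Open Scope R_scope.

Definition M : nat := 25%nat.

(* N_j = A_j^{-1} B_j with A_j = [[8j+10+xi, 0], [-13, 8j+13+xi]] and
   B_j = [[8(j-1), 10], [0, 8(j-1)]].  Applying A_j^{-1} (lower triangular)
   to B_j (c,d)^T is forward substitution:
     c_j = (8(j-1) c + 10 d) / (8j+10+xi)
     d_j = (13 c_j + 8(j-1) d) / (8j+13+xi). *)
Fixpoint cd (j : nat) (xi : R) : R * R :=
  match j with
  | O => (/ (xi + 10), (xi + 23) / ((xi + 13) * (xi + 10)))
  | S k =>
      let c := fst (cd k xi) in
      let d := snd (cd k xi) in
      let cj := (8 * INR k * c + 10 * d) / (8 * INR (S k) + 10 + xi) in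
      let dj := (13 * cj + 8 * INR k * d) / (8 * INR (S k) + 13 + xi) in
      (cj, dj)
  end.

Definition c (j : nat) (xi : R) : R := fst (cd j xi).
Definition d (j : nat) (xi : R) : R := snd (cd j xi).

Definition has_laplace (f : R -> R) (F : R -> R) : Prop :=
  exists s0 : R, forall xi : R, s0 < xi ->
    is_RInt_gen (fun t => exp (- (xi * t)) * f t)
      (at_point 0) (Rbar_locally p_infty) (F xi).

Definition cont_halfline (f : R -> R) : Prop :=
  forall t, 0 <= t -> forall eps, 0 < eps -> exists delta, 0 < delta /\
    forall s, 0 <= s -> Rabs (s - t) < delta -> Rabs (f s - f t) < eps.

(* f-ring is the inverse Laplace transform of F: the (unique, by Lerch's
   theorem) continuous function on [0,oo) whose Laplace transform is F. *)
Definition inv_laplace (F : R -> R) (f : R -> R) : Prop :=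
  cont_halfline f /\ has_laplace f F.

Definition cont_quadrant (w : R -> R -> R) : Prop :=
  forall t g, 0 <= t -> 0 <= g -> forall eps, 0 < eps -> exists delta,
    0 < delta /\ forall s h, 0 <= s -> 0 <= h ->
      Rabs (s - t) < delta -> Rabs (h - g) < delta ->
      Rabs (w s h - w t g) < eps.

Definition is_w_solution (w1 w2 : R -> R -> R) : Prop :=
  cont_quadrant w1 /\ cont_quadrant w2 /\
  (forall g, 0 <= g -> w1 0 g = - 10 * (g ^ 2 / (1 + g ^ 2)) /\ w2 0 g = 0) /\
  (forall t g, 0 < t -> 0 < g ->
     exists a1 b1 a2 b2 : R,
       differentiable_pt_lim w1 t g a1 b1 /\
       differentiable_pt_lim w2 t g a2 b2 /\
       a1 - 4 * g * b1 + 10 * w1 t g - 10 / (1 + g ^ 2) * w2 t g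
         = 130 * exp (- (23 * t)) /\
       a2 - 4 * g * b2 + 13 * w2 t g - 13 * w1 t g
         = 130 * exp (- (23 * t))).

Definition beta (w2 : R -> R -> R) (dr : nat -> R -> R) (t g : R) : R :=
  w2 t g - sum_f 1 M (fun j => dr j t / (1 + g ^ 2) ^ j).

Definition P_M (cr dr : nat -> R -> R) (t : R) : R :=
  8 * INR M * cr M t + 10 * dr M t.
Definition Q_M (dr : nat -> R -> R) (t : R) : R :=
  8 * INR M * dr M t.

(* Main.v *)
Require Import Defs.
From Stdlib Require Import Reals Lra Lia Arith QArith Qreals ZArith List.
From Coquelicot Require Import Coquelicot.
Import ListNotations.
Open Scope R_scope.

Fixpoint sumN (f : nat -> R) (n : nat) : R :=
  match n with O => 0 | S n => sumN f n + f n end.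

Lemma sumN_ext f g n : (forall i, (i < n)%nat -> f i = g i) -> sumN f n = sumN g n.
Proof. induction n; simpl; intros H; auto. rewrite IHn by (intros; apply H; lia). rewrite H by lia; auto. Qed.
Lemma sumN_plus f g n : sumN (fun i => f i + g i) n = sumN f n + sumN g n.
Proof. induction n; simpl; [lra|]. rewrite IHn; lra. Qed.
Lemma sumN_scal a f n : sumN (fun i => a * f i) n = a * sumN f n.
Proof. induction n; simpl; [lra|]. rewrite IHn; lra. Qed.
Lemma sumN_zero n : sumN (fun _ => 0) n = 0.
Proof. induction n; simpl; lra. Qed.
Lemma sumN_ind m a n : (m < n)%nat -> sumN (fun i => if Nat.eqb i m then a else 0) n = a.
Proof.
  induction n; intros H; [lia|]. simpl.
  destruct (Nat.eq_dec m n) as [->|Hne].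
  - rewrite Nat.eqb_refl. rewrite (sumN_ext _ (fun _ => 0)). rewrite sumN_zero; lra.
    intros i Hi. destruct (Nat.eqb_spec i n); [lia|auto].
  - rewrite IHn by lia. destruct (Nat.eqb_spec n m); [lia|lra].
Qed.
Lemma sumN_le f g n : (forall i, (i < n)%nat -> f i <= g i) -> sumN f n <= sumN g n.
Proof. induction n; simpl; intros H; [lra|]. pose proof (H n ltac:(lia)). pose proof (IHn ltac:(intros; apply H; lia)). lra. Qed.

Definition NN := 214%nat.
Definition es (w : nat -> R) (t : R) : R := sumN (fun i => w i * exp (- (INR i * t))) NN.
Definition lap (w : nat -> R) (xi : R) : R := sumN (fun i => w i / (xi + INR i)) NN.
Definition dterm (v : nat -> R) (m1 j : nat) : R :=
  if Nat.eqb j m1 then 0 else v j / (INR m1 - INR j).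
Definition divF (v : nat -> R) (m1 : nat) (k : R) (i : nat) : R :=
  if Nat.eqb i m1 then k - sumN (dterm v m1) NN else dterm v m1 i.

Lemma INR_neq i j : i <> j -> INR i - INR j <> 0.
Proof. intros H E. apply H. apply INR_eq. lra. Qed.

Lemma divF_split v m1 k i :
  divF v m1 k i = dterm v m1 i + (if Nat.eqb i m1 then k - sumN (dterm v m1) NN else 0).
Proof. unfold divF, dterm. destruct (Nat.eqb i m1); lra. Qed.

Lemma lap_div v m1 k xi : (m1 < NN)%nat -> v m1 = 0 -> 0 < xi ->
  lap (divF v m1 k) xi = (lap v xi + k) / (xi + INR m1).
Proof.
  intros Hm Hv Hxi. unfold lap.
  assert (Hp : forall i, 0 < xi + INR i) by (intros; pose proof (pos_INR i); lra).
  rewrite (sumN_ext _ (fun i => (/ (xi + INR m1)) * (v i / (xi + INR i)) +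
     ((/ (xi + INR m1)) * dterm v m1 i + (if Nat.eqb i m1 then (k - sumN (dterm v m1) NN) / (xi + INR m1) else 0)))).
  - rewrite !sumN_plus, !sumN_scal, sumN_ind by auto. field. specialize (Hp m1); lra.
  - intros i _. unfold divF, dterm. pose proof (Hp i). pose proof (Hp m1).
    destruct (Nat.eqb_spec i m1) as [->|Hne].
    + rewrite Hv. field. lra.
    + pose proof (INR_neq _ _ (not_eq_sym Hne)). field. repeat split; lra.
Qed.

Lemma es_lin a v b w t : es (fun i => a * v i + b * w i) t = a * es v t + b * es w t.
Proof. unfold es. rewrite <- !sumN_scal, <- sumN_plus. apply sumN_ext; intros; ring. Qed.
Lemma lap_lin a v b w xi : lap (fun i => a * v i + b * w i) xi = a * lap v xi + b * lap w xi.
Proof. unfold lap. rewrite <- !sumN_scal, <- sumN_plus. apply sumN_ext; intros; unfold Rdiv; ring. Qed.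

Lemma sumN_derive (f df : nat -> R -> R) n t :
  (forall i, (i < n)%nat -> is_derive (f i) t (df i t)) ->
  is_derive (fun t => sumN (fun i => f i t) n) t (sumN (fun i => df i t) n).
Proof.
  induction n; intros H; simpl.
  - apply (is_derive_const 0 t).
  - apply (is_derive_plus (fun t => sumN (fun i => f i t) n) (f n)).
    apply IHn; intros; apply H; lia. apply H; lia.
Qed.

Lemma es_derive w t : is_derive (es w) t (es (fun i => - INR i * w i) t).
Proof.
  unfold es. apply (sumN_derive (fun i t => w i * exp (- (INR i * t)))
    (fun i t => - INR i * w i * exp (- (INR i * t)))).
  intros i _. auto_derive; auto. ring.
Qed.

Lemma es_div_ode v m1 k t : v m1 = 0 ->
  es (fun i => - INR i * divF v m1 k i) t = - INR m1 * es (divF v m1 k) t + es v t.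
Proof.
  intros Hv. unfold es. rewrite <- sumN_scal, <- sumN_plus. apply sumN_ext. intros i _.
  unfold divF, dterm. destruct (Nat.eqb_spec i m1) as [->|Hne].
  - rewrite Hv; ring.
  - pose proof (INR_neq _ _ (not_eq_sym Hne)). field. auto.
Qed.

Lemma es_div_0 v m1 k : (m1 < NN)%nat -> es (divF v m1 k) 0 = k.
Proof.
  intros Hm. unfold es.
  rewrite (sumN_ext _ (fun i => dterm v m1 i + (if Nat.eqb i m1 then k - sumN (dterm v m1) NN else 0))).
  rewrite sumN_plus, sumN_ind by auto. ring.
  intros i _. rewrite Rmult_0_r, Ropp_0, exp_0, Rmult_1_r. apply divF_split.
Qed.

Lemma lim_expm c : 0 < c -> filterlim (fun t => exp (- (c * t))) (Rbar_locally p_infty) (locally 0).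
Proof.
  intros Hc.
  assert (H : is_lim (fun t => exp (- (c * t))) p_infty 0). 2: exact H.
  apply (is_lim_comp (fun y => exp y) (fun t => - (c*t)) p_infty 0 m_infty).
  - apply is_lim_exp_m.
  - replace m_infty with (Rbar_opp (Rbar_mult c p_infty)).
    apply is_lim_opp. apply is_lim_scal_l. apply is_lim_id.
    simpl. destruct (Rle_dec 0 c); [|lra]. destruct (Rle_lt_or_eq_dec 0 c r); [reflexivity|lra].
  - exists 0. intros; discriminate.
Qed.

Lemma filterlim_at_point_self (f : R -> R) a : filterlim f (at_point a) (locally (f a)).
Proof. intros P HP. unfold filtermap, at_point. apply locally_singleton. exact HP. Qed.

Lemma lap_exp1 a c : 0 < c ->
  is_RInt_gen (fun t => a * exp (- (c * t))) (at_point 0) (Rbar_locally p_infty) (a / c).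
Proof.
  intros Hc.
  set (F := fun t => - (a / c) * exp (- (c * t))).
  assert (HD : forall t, is_derive F t (a * exp (- (c * t)))).
  { intros t. unfold F. auto_derive; auto. field. lra. }
  apply (is_RInt_gen_ext (Derive F)).
  - apply filter_forall. intros [x y] z _. apply is_derive_unique, HD.
  - replace (a / c) with (0 - F 0).
    2:{ unfold F. rewrite Rmult_0_r, Ropp_0, exp_0. field. lra. }
    apply is_RInt_gen_Derive.
    + apply filter_forall. intros [x y] z _. eexists; apply HD.
    + apply filter_forall. intros [x y] z _.
      apply (continuous_ext (fun t => a * exp (- (c * t))) (Derive F)).
      intros; symmetry; apply is_derive_unique, HD.
      apply (ex_derive_continuous (V := R_NormedModule) (fun t => a * exp (- (c * t)))). auto_derive; auto.
    + apply filterlim_at_point_self.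
    + unfold F. replace (locally 0) with (locally (- (a/c) * 0)) by (f_equal; ring).
      apply (filterlim_comp _ _ _ (fun t => exp (- (c*t))) (fun y => -(a/c) * y) _ (locally 0)).
      apply lim_expm; auto.
      apply (filterlim_scal_r (K := R_AbsRing) (V := R_NormedModule)).
Qed.

Lemma sum_laplace w xi n : 0 < xi ->
  is_RInt_gen (fun t => exp (- (xi * t)) * sumN (fun i => w i * exp (- (INR i * t))) n)
    (at_point 0) (Rbar_locally p_infty) (sumN (fun i => w i / (xi + INR i)) n).
Proof.
  intros Hxi. induction n.
  - assert (H := lap_exp1 0 1 Rlt_0_1). unfold Rdiv in H. rewrite Rmult_0_l in H.
    revert H. apply is_RInt_gen_ext. apply filter_forall. intros ab t _. simpl. ring.
  - change (sumN (fun i => w i / (xi + INR i)) (S n)) with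
      (plus (sumN (fun i => w i / (xi + INR i)) n) (w n / (xi + INR n))).
    apply (is_RInt_gen_ext (fun t => plus (exp (- (xi * t)) * sumN (fun i => w i * exp (- (INR i * t))) n)
                                        (w n * exp (- ((xi + INR n) * t))))).
    + apply filter_forall. intros _ t _. unfold plus. cbn -[exp INR sumN].
      change (sumN (fun i => w i * exp (- (INR i * t))) (S n)) with
        (sumN (fun i => w i * exp (- (INR i * t))) n + w n * exp (- (INR n * t))).
      replace (exp (- ((xi + INR n) * t))) with (exp (- (xi * t)) * exp (- (INR n * t)))
        by (rewrite <- exp_plus; f_equal; ring).
      set (A := sumN _ n). set (E1 := exp (- (xi * t))). set (E2 := exp (- (INR n * t))). ring.
    + assert (H2 := lap_exp1 (w n) (xi + INR n) ltac:(pose proof (pos_INR n); lra)).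
      exact (is_RInt_gen_plus (V := R_NormedModule) (Fa := at_point 0) (Fb := Rbar_locally p_infty)
        _ _ _ _ IHn H2).
Qed.

Lemma es_laplace w xi : 0 < xi ->
  is_RInt_gen (fun t => exp (- (xi * t)) * es w t) (at_point 0) (Rbar_locally p_infty) (lap w xi).
Proof. intros; apply sum_laplace; auto. Qed.


Fixpoint vcd (k : nat) : (nat -> R) * (nat -> R) :=
  match k with
  | O => (fun _ => 0, fun _ => 0)
  | S k =>
      let c := fst (vcd k) in let d := snd (vcd k) in
      let c' := divF (fun i => 8 * INR k * c i + 10 * d i) (8*k+18) (if Nat.eqb k 0 then 10 else 0) in
      (c', divF (fun i => 13 * c' i + 8 * INR k * d i) (8*k+21) 0)
  end.
Definition vc k := fst (vcd k).
Definition vd k := snd (vcd k).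

Lemma vc_S k : vc (S k) = divF (fun i => 8 * INR k * vc k i + 10 * vd k i) (8*k+18) (if Nat.eqb k 0 then 10 else 0).
Proof. reflexivity. Qed.
Lemma vd_S k : vd (S k) = divF (fun i => 13 * vc (S k) i + 8 * INR k * vd k i) (8*k+21) 0.
Proof. reflexivity. Qed.

Lemma divF_out v m1 k i : i <> m1 -> v i = 0 -> divF v m1 k i = 0.
Proof. intros H1 H2. unfold divF, dterm. destruct (Nat.eqb_spec i m1); [lia|]. rewrite H2. unfold Rdiv; ring. Qed.

Lemma vcd_supp k : forall i, ((8*k+10 < i)%nat -> vc k i = 0) /\ ((8*k+13 < i)%nat -> vd k i = 0).
Proof.
  induction k; intros i.
  - split; intros; reflexivity.
  - assert (Hc : (8 * S k + 10 < i)%nat -> vc (S k) i = 0).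
    { intros H. rewrite vc_S. apply divF_out; [lia|]. destruct (IHk i) as [H1 H2].
      rewrite H1, H2 by lia. ring. }
    split; auto. intros H. rewrite vd_S. apply divF_out; [lia|]. destruct (IHk i) as [H1 H2].
    rewrite Hc, H2 by lia. ring.
Qed.

Lemma INR_lin k a : INR (8*k+a) = 8 * INR k + INR a.
Proof. rewrite plus_INR, mult_INR. replace (INR 8) with 8 by (simpl; ring). reflexivity. Qed.

Lemma d0_pos xi : 0 < xi -> 0 < d 0 xi.
Proof. intros H. unfold d; simpl. apply Rdiv_lt_0_compat; [lra|]. apply Rmult_lt_0_compat; lra. Qed.

Lemma lap_zero xi : lap (fun _ => 0) xi = 0.
Proof. unfold lap. rewrite (sumN_ext _ (fun _ => 0)). apply sumN_zero. intros; unfold Rdiv; ring. Qed.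

Lemma c_S k xi : c (S k) xi = (8 * INR k * c k xi + 10 * d k xi) / (8 * INR (S k) + 10 + xi).
Proof. reflexivity. Qed.
Lemma d_S k xi : d (S k) xi = (13 * c (S k) xi + 8 * INR k * d k xi) / (8 * INR (S k) + 13 + xi).
Proof. reflexivity. Qed.

Lemma vcd_lap k xi : (k < 25)%nat -> 0 < xi ->
  lap (vc (S k)) xi = c (S k) xi / d 0 xi /\ lap (vd (S k)) xi = d (S k) xi / d 0 xi.
Proof.
  intros Hk Hxi. pose proof (d0_pos xi Hxi) as Hd0.
  induction k as [|k IH].
  - assert (Hc : lap (vc 1) xi = c 1 xi / d 0 xi).
    { rewrite vc_S. rewrite lap_div; [| unfold NN; lia | cbv [vc vd vcd fst snd]; ring | auto].
      rewrite lap_lin. change (vc 0) with (fun _ : nat => 0). change (vd 0) with (fun _ : nat => 0).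
      rewrite lap_zero. rewrite c_S. cbv [Nat.eqb].
      replace (INR (8*0+18)) with 18 by (simpl; ring). replace (INR 1) with 1 by reflexivity.
      replace (INR 0) with 0 by reflexivity. field. split; lra. }
    split; auto.
    rewrite vd_S. rewrite lap_div; [| unfold NN; lia | | auto].
    2:{ destruct (vcd_supp 1 (8*0+21)) as [H1 _]. rewrite H1 by lia.
        change (vd 0 (8*0+21)%nat) with 0. ring. }
    rewrite lap_lin, Hc. change (vd 0) with (fun _ : nat => 0). rewrite lap_zero.
    rewrite (d_S 0).
    replace (INR (8*0+21)) with 21 by (simpl; ring). replace (INR 1) with 1 by reflexivity.
    replace (INR 0) with 0 by reflexivity. field. split; lra.
  - destruct IH as [IHc IHd]; [lia|].
    assert (Hc : lap (vc (S (S k))) xi = c (S (S k)) xi / d 0 xi).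
    { rewrite vc_S. rewrite lap_div; [| unfold NN; lia | | auto].
      2:{ destruct (vcd_supp (S k) (8*S k+18)) as [H1 H2]. rewrite H1, H2 by lia. ring. }
      rewrite lap_lin, IHc, IHd. rewrite (c_S (S k)).
      rewrite INR_lin. replace (if Nat.eqb (S k) 0 then 10 else 0) with 0 by reflexivity.
      replace (INR 18) with 18 by (simpl; ring). rewrite !S_INR.
      pose proof (pos_INR k). field. split; lra. }
    split; auto.
    rewrite vd_S. rewrite lap_div; [| unfold NN; lia | | auto].
    2:{ destruct (vcd_supp (S (S k)) (8*S k+21)) as [H1 _]. destruct (vcd_supp (S k) (8*S k+21)) as [_ H2].
        rewrite H1, H2 by lia. ring. }
    rewrite lap_lin, Hc, IHd. rewrite (d_S (S k)).
    rewrite INR_lin. replace (INR 21) with 21 by (simpl; ring). rewrite !S_INR.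
    pose proof (pos_INR k). field. split; lra.
Qed.

Lemma es_zero t : es (fun _ => 0) t = 0.
Proof. unfold es. rewrite (sumN_ext _ (fun _ => 0)). apply sumN_zero. intros; ring. Qed.
Lemma ec0 t : es (vc 0) t = 0.
Proof. apply es_zero. Qed.
Lemma ed0 t : es (vd 0) t = 0.
Proof. apply es_zero. Qed.

Lemma ec_derive k t : (k < 25)%nat ->
  is_derive (es (vc (S k))) t
    (- (8 * INR k + 18) * es (vc (S k)) t + 8 * INR k * es (vc k) t + 10 * es (vd k) t).
Proof.
  intros Hk. eapply is_derive_ext; [intros; reflexivity|].
  replace (- (8 * INR k + 18) * es (vc (S k)) t + 8 * INR k * es (vc k) t + 10 * es (vd k) t)
    with (es (fun i => - INR i * vc (S k) i) t).
  apply es_derive.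
  rewrite vc_S, es_div_ode. rewrite es_lin, INR_lin. replace (INR 18) with 18 by (simpl; ring). ring.
  destruct (vcd_supp k (8*k+18)) as [H1 H2]. rewrite H1, H2 by lia. ring.
Qed.

Lemma ed_derive k t : (k < 25)%nat ->
  is_derive (es (vd (S k))) t
    (- (8 * INR k + 21) * es (vd (S k)) t + 13 * es (vc (S k)) t + 8 * INR k * es (vd k) t).
Proof.
  intros Hk. eapply is_derive_ext; [intros; reflexivity|].
  replace (- (8 * INR k + 21) * es (vd (S k)) t + 13 * es (vc (S k)) t + 8 * INR k * es (vd k) t)
    with (es (fun i => - INR i * vd (S k) i) t).
  apply es_derive.
  rewrite vd_S, es_div_ode. rewrite es_lin, INR_lin. replace (INR 21) with 21 by (simpl; ring). ring.
  destruct (vcd_supp (S k) (8*k+21)) as [H1 _]. destruct (vcd_supp k (8*k+21)) as [_ H2].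
  rewrite H1, H2 by lia. ring.
Qed.

Lemma ec_init k : (k < 25)%nat -> es (vc (S k)) 0 = if Nat.eqb k 0 then 10 else 0.
Proof. intros Hk. rewrite vc_S. apply es_div_0. unfold NN; lia. Qed.
Lemma ed_init k : (k < 25)%nat -> es (vd (S k)) 0 = 0.
Proof. intros Hk. rewrite vd_S. apply es_div_0. unfold NN; lia. Qed.

Fixpoint sumQ (l : list Q) : Q := match l with nil => 0%Q | a :: l' => Qred (a + sumQ l')%Q end.
Definition Qn (n : nat) : Q := inject_Z (Z.of_nat n).
Definition dtermQ (l : list Q) (m1 j : nat) : Q :=
  if Nat.eqb j m1 then 0%Q else Qred (nth j l 0%Q / (Qn m1 - Qn j))%Q.
Definition divQ (l : list Q) (m1 : nat) (k : Q) : list Q :=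
  let s := sumQ (map (dtermQ l m1) (seq 0 NN)) in
  map (fun i => if Nat.eqb i m1 then Qred (k - s)%Q else dtermQ l m1 i) (seq 0 NN).
Definition linQ (a : Q) (l1 : list Q) (b : Q) (l2 : list Q) : list Q :=
  map (fun i => Qred (a * nth i l1 0 + b * nth i l2 0)%Q) (seq 0 NN).
Definition zeroQ := repeat 0%Q NN.
Fixpoint vcdQ (k : nat) : list Q * list Q :=
  match k with
  | O => (zeroQ, zeroQ)
  | S k => let (c, d) := vcdQ k in
     let c' := divQ (linQ (8 * Qn k) c 10 d) (8*k+18) (if Nat.eqb k 0 then 10%Q else 0%Q) in
     (c', divQ (linQ 13 c' (8 * Qn k) d) (8*k+21) 0%Q)
  end.

Lemma Q2R_red q : Q2R (Qred q) = Q2R q.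
Proof. apply Qeq_eqR, Qred_correct. Qed.
Lemma Q2R_Qn n : Q2R (Qn n) = INR n.
Proof. unfold Qn, Q2R; simpl. rewrite INR_IZR_INZ. field. Qed.
Lemma Q2R_Z z : Q2R (inject_Z z) = IZR z.
Proof. unfold Q2R; simpl. field. Qed.

Lemma nth_map_seq (f : nat -> Q) i n : (i < n)%nat -> nth i (map f (seq 0 n)) 0%Q = f i.
Proof.
  intros H. rewrite (nth_indep _ _ (f 0%nat)) by (rewrite length_map, length_seq; auto).
  rewrite map_nth, seq_nth by auto. reflexivity.
Qed.

Lemma sumN_shift f n : sumN f (S n) = f 0%nat + sumN (fun i => f (S i)) n.
Proof. induction n. simpl; ring. change (sumN f (S (S n))) with (sumN f (S n) + f (S n)).
  rewrite IHn. simpl. ring. Qed.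

Lemma sumQ_seq (f : nat -> Q) s n : Q2R (sumQ (map f (seq s n))) = sumN (fun i => Q2R (f (s + i)%nat)) n.
Proof.
  revert s. induction n; intros s. cbn [seq map sumQ sumN]. unfold Q2R; simpl; field. cbn [seq map sumQ].
  rewrite Q2R_red, Q2R_plus, IHn. rewrite sumN_shift. rewrite Nat.add_0_r.
  f_equal. apply sumN_ext. intros. f_equal. f_equal. lia.
Qed.

Definition rel (l : list Q) (v : nat -> R) := forall i, (i < NN)%nat -> Q2R (nth i l 0%Q) = v i.

Lemma Q2R_dterm l v m1 j : rel l v -> (j < NN)%nat -> Q2R (dtermQ l m1 j) = dterm v m1 j.
Proof.
  intros Hr Hj. unfold dtermQ, dterm. destruct (Nat.eqb_spec j m1).
  - unfold Q2R; simpl; field.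
  - rewrite Q2R_red. assert (Hne : INR m1 - INR j <> 0) by (apply INR_neq; auto).
    rewrite Q2R_div. rewrite Q2R_minus, !Q2R_Qn, Hr by auto. reflexivity.
    intros E. apply Qeq_eqR in E. rewrite Q2R_minus, !Q2R_Qn in E. apply Hne. rewrite E. unfold Q2R; simpl; field.
Qed.

Lemma rel_div l v m1 k : rel l v -> rel (divQ l m1 k) (divF v m1 (Q2R k)).
Proof.
  intros Hr i Hi. unfold divQ. rewrite nth_map_seq by auto. unfold divF.
  destruct (Nat.eqb i m1).
  - rewrite Q2R_red, Q2R_minus, sumQ_seq. f_equal. apply sumN_ext. intros j Hj. simpl.
    apply Q2R_dterm; auto.
  - apply Q2R_dterm; auto.
Qed.

Lemma rel_lin a l1 b l2 v1 v2 : rel l1 v1 -> rel l2 v2 ->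
  rel (linQ a l1 b l2) (fun i => Q2R a * v1 i + Q2R b * v2 i).
Proof.
  intros H1 H2 i Hi. unfold linQ. rewrite nth_map_seq by auto.
  rewrite Q2R_red, Q2R_plus, !Q2R_mult, H1, H2 by auto. reflexivity.
Qed.

Lemma rel_ext l v w : rel l v -> (forall i, (i < NN)%nat -> v i = w i) -> rel l w.
Proof. intros H E i Hi. rewrite H by auto. auto. Qed.

Lemma Q2R_8Qn k : Q2R (8 * Qn k) = 8 * INR k.
Proof. rewrite Q2R_mult, Q2R_Qn. f_equal. unfold Q2R; simpl; field. Qed.
Lemma Q2R_lit z : Q2R (Qmake z 1) = IZR z.
Proof. unfold Q2R; simpl; field. Qed.

Lemma rel_vcd k : rel (fst (vcdQ k)) (vc k) /\ rel (snd (vcdQ k)) (vd k).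
Proof.
  induction k.
  - split; intros i Hi; cbn [vcdQ fst snd]; unfold zeroQ; rewrite nth_repeat; cbv [vc vd vcd fst snd]; unfold Q2R; simpl; field.
  - destruct IHk as [Hc Hd].
    assert (Hc' : rel (fst (vcdQ (S k))) (vc (S k))).
    { simpl vcdQ. destruct (vcdQ k) as [cq dq]. simpl fst. rewrite vc_S.
      replace (if Nat.eqb k 0 then 10 else 0) with (Q2R (if Nat.eqb k 0 then 10%Q else 0%Q))
        by (destruct (Nat.eqb k 0); unfold Q2R; simpl; field).
      pose proof (rel_div _ _ (8*k+18) (if Nat.eqb k 0 then 10%Q else 0%Q) (rel_lin (8 * Qn k) _ 10 _ _ _ Hc Hd)) as H.
      rewrite Q2R_8Qn, Q2R_lit in H. exact H. }
    split; auto.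
    revert Hc'. simpl vcdQ. destruct (vcdQ k) as [cq dq]. simpl fst; simpl snd. intros Hc'. rewrite vd_S.
    replace 0 with (Q2R 0) by (unfold Q2R; simpl; field).
    pose proof (rel_div _ _ (8*k+21) 0%Q (rel_lin 13 _ (8 * Qn k) _ _ _ Hc' Hd)) as H.
    rewrite Q2R_8Qn, Q2R_lit in H. exact H.
Qed.

Fixpoint paddZ (l1 l2 : list Z) : list Z :=
  match l1, l2 with [], l => l | l, [] => l | a::l1', b::l2' => (a+b)%Z :: paddZ l1' l2' end.
Definition p1mx (l : list Z) := paddZ l (map Z.opp (0%Z::l)).
Definition mono (b:Z) k := repeat 0%Z k ++ [b].
Fixpoint bernP_aux (bs : list Z) (Sp : list Z) (k : nat) : list Z :=
  match bs with [] => Sp | b::bs' => bernP_aux bs' (paddZ (p1mx Sp) (mono b k)) (S k) end.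
Definition bernP bs := match bs with [] => [] | b0 :: bs' => bernP_aux bs' [b0] 1 end.
Definition certP (a b : nat) bs := repeat 0%Z a ++ Nat.iter b p1mx (bernP bs).

Fixpoint pevalZ (l : list Z) (x : R) : R :=
  match l with [] => 0 | a :: l' => IZR a + x * pevalZ l' x end.

Lemma peval_padd l1 l2 x : pevalZ (paddZ l1 l2) x = pevalZ l1 x + pevalZ l2 x.
Proof.
  revert l2; induction l1; intros l2; [simpl; ring|]. destruct l2; [simpl; ring|].
  simpl. rewrite IHl1, plus_IZR. ring.
Qed.
Lemma peval_opp l x : pevalZ (map Z.opp l) x = - pevalZ l x.
Proof. induction l; simpl; [ring|]. rewrite IHl, opp_IZR. ring. Qed.
Lemma peval_p1mx l x : pevalZ (p1mx l) x = (1 - x) * pevalZ l x.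
Proof. unfold p1mx. rewrite peval_padd, peval_opp. simpl. ring. Qed.
Lemma peval_rep a l x : pevalZ (repeat 0%Z a ++ l) x = x ^ a * pevalZ l x.
Proof. induction a; simpl; [ring|]. rewrite IHa. ring. Qed.
Lemma peval_mono b k x : pevalZ (mono b k) x = x ^ k * IZR b.
Proof. unfold mono. rewrite peval_rep. simpl. ring. Qed.

Fixpoint bernR_aux (bs : list Z) (s : R) (k : nat) (x : R) : R :=
  match bs with [] => s | b :: bs' => bernR_aux bs' ((1 - x) * s + x ^ k * IZR b) (S k) x end.

Lemma bern_sound bs Sp k x : pevalZ (bernP_aux bs Sp k) x = bernR_aux bs (pevalZ Sp x) k x.
Proof.
  revert Sp k; induction bs; intros Sp k; simpl; auto.
  rewrite IHbs, peval_padd, peval_p1mx, peval_mono. reflexivity.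
Qed.

Lemma bern_nonneg bs s k x : 0 <= x <= 1 -> forallb (Z.leb 0) bs = true -> 0 <= s ->
  0 <= bernR_aux bs s k x.
Proof.
  revert s k; induction bs; intros s k Hx Hb Hs; simpl; auto.
  simpl in Hb. apply andb_prop in Hb as [H1 H2]. apply IHbs; auto.
  apply Z.leb_le in H1. apply IZR_le in H1.
  apply Rplus_le_le_0_compat. apply Rmult_le_pos; lra.
  apply Rmult_le_pos; auto. apply pow_le; lra.
Qed.

Lemma cert_nonneg a b bs x : 0 <= x <= 1 -> forallb (Z.leb 0) bs = true ->
  0 <= pevalZ (certP a b bs) x.
Proof.
  intros Hx Hb. unfold certP. rewrite peval_rep. apply Rmult_le_pos; [apply pow_le; lra|].
  induction b.
  - simpl. destruct bs as [|b0 bs]; simpl; [lra|]. simpl in Hb. apply andb_prop in Hb as [H1 H2].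
    rewrite bern_sound. apply bern_nonneg; auto. simpl. apply Z.leb_le in H1. apply IZR_le in H1. lra.
  - simpl. rewrite peval_p1mx. apply Rmult_le_pos; lra.
Qed.

Lemma peval_sum l x : pevalZ l x = sumN (fun i => IZR (nth i l 0%Z) * x ^ i) (length l).
Proof.
  induction l; [reflexivity|]. cbn [pevalZ length]. rewrite sumN_shift. rewrite IHl.
  rewrite <- sumN_scal. f_equal; [simpl; ring|]. apply sumN_ext; intros; simpl; ring.
Qed.

Lemma exp_pow_INR i t : exp (- (INR i * t)) = exp (- t) ^ i.
Proof.
  induction i. simpl. rewrite Rmult_0_l, Ropp_0, exp_0. reflexivity.
  rewrite S_INR. cbn [pow]. rewrite <- IHi, <- exp_plus. f_equal. ring.
Qed.

Definition cert_check (wl : list Q) (D : Z) (cp : list Z) : bool :=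
  Nat.eqb (length cp) NN &&
  forallb (fun i => Qeq_bool (nth i wl 0%Q * inject_Z D) (inject_Z (nth i cp 0%Z))) (seq 0 NN).

Lemma cert_es wl v D a b bs t : rel wl v -> cert_check wl D (certP a b bs) = true ->
  forallb (Z.leb 0) bs = true -> (0 < D)%Z -> 0 <= t -> 0 <= es v t.
Proof.
  intros Hr Hc Hb HD Ht. unfold cert_check in Hc. apply andb_prop in Hc as [Hl Hc].
  apply Nat.eqb_eq in Hl. rewrite forallb_forall in Hc.
  assert (HDp : 0 < IZR D) by (apply IZR_lt; auto).
  assert (E : es v t * IZR D = pevalZ (certP a b bs) (exp (- t))).
  { rewrite peval_sum, Hl. unfold es. rewrite Rmult_comm, <- sumN_scal. apply sumN_ext.
    intros i Hi. rewrite <- Hr by auto. rewrite exp_pow_INR.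
    assert (Hq := Hc i ltac:(apply in_seq; lia)). apply Qeq_bool_eq, Qeq_eqR in Hq.
    rewrite Q2R_mult, !Q2R_Z in Hq. rewrite <- Hq. ring. }
  assert (0 <= es v t * IZR D).
  { rewrite E. apply cert_nonneg; auto. split. apply Rlt_le, exp_pos.
    rewrite <- exp_0. destruct (Req_dec t 0) as [->|]. rewrite Ropp_0; lra. apply Rlt_le, exp_increasing. lra. }
  apply (Rmult_le_reg_r (IZR D)); auto. lra.
Qed.

Definition Dcert : Z := 1859456117901446122279559251996332610702531587395036770738173697327104.
Definition betasZ : list Z := [
16166106336614649047439962040242834716765476621830904928083095185397542625;
3152390735639856564250792597847352769769267941257026460976203561152520811875;
305781901357066086732326881991193218667618990301931566714691745431794518751875;
19671934852748377697520069229608036947338624140746308133639467535080776005620300;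
944247957555828290435577057318329116152193508866197127613873437055364571361727600;
36069896443899071391571532889861923617761173667121329636867240541896558110243218800;
1142193567501421103071202143472664459657437863181673738162818810719088224047366554000;
30838423617045365397615653753156933987098350536679872066708033728556119346810314284000;
724676545989614043741138935230266329308941454318089541341040075064902891842612656876400;
15056436605893071358805323472726770493862911472799256740767081885793583115996677828482800;
280032224519507112898831177780176337257381521617046673690587481930021704893349983635116400;
4709265045809287731061620526739163943140105707195126674298347801853319659887073566918300800;
72201837458110797895519245138281037701204131299492972580901794101635189359080860226922843200;
1016263268977648860975934988581141555845491937872652720683802091950637506999328614867645619200;
13209633506531690996211723929899762278162659123736828869136183493436366363033650067269558656000;
159371059232916211273241472850536567069834994405468340434373010386659569271476554880771208771200;
1792597493246203491334714878125438041812230316807304858931393446732359524296477954978373393296800;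
18871063043543572332319779051405369699639851957158854921400640633470396657227380892041181056719200;
186569754301814231704210349299332285525487019853425437346124934914505811527279339664234175563061600;
1737582458729037123991812115174500119849149563587608310908535564190477796906916466919356640975785600;
15286180728799518297836590189838285473407697611219947874056326867044278586581568940962993044643590400;
127342756045442681281292031370323753652970204929288306028554979773034308227980731179558939487713984000;
1006797547256632951377178473390863335333651393800190033969726690127457068772705093917384347233592896000;
7569824539692817832939405675510646134250980400311880496722343558142500858886277077623116708901824576000;
54226515453241919492135321109685066079699011341463709364737856562944001961826034966771808884142802720000;
370731065542041598859180012849657348910305082190216767670070155098847472021653592526177108799781630880000;
2422743548537431527717859967049834670989726333090227168956586488709059070096355766799264131433089432992000;
15155986173366002896864710022391599827128378646056530484200683499520308045040003568115012018363494175180800;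
90880223937053054264791948795311145681412342625643035048031962219020277971137169963464128180611364597120000;
522999313769523369276776082562441587726212474865368154679156004209610488943364678925172550457527651499929600;
2891876340334668990123490386741867801850769691855654730109456392779274376547043986345105254608403571519590400;
15380534350764671348920001417367653806330125476245485563151822680288474317865874154959290090959224128874240000;
78761070708232611069885804593950682174187563716008660585181152539522866202473017105827955586784842515433670400;
388693805165333425708979914730553238479583688304842337660361381607686961603925272960001585328421430046706208000;
1850296117813840025449777506618087657424534140911111139054333103060172506397155246414318258618771780012837612800;
8502975140045327885632875515446107000640285171110407250701164979554090715700033018584858794254821581456447104000;
37751453614049712622731945209562625964629258622154564315758600081553359484887022436136435084285502946296071577600;
162049213862520084887671349928111896187497419028592336268900024754862435330210072487709062070580615861140588236800;
672992043537068102663243717090267645294680014120168411334558156588734114560202940305762915734044046481138700185600;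
2705859425004866017684832357437259456962042529076960061309153722500757494679995007679897943221996737228040862515200;
10539012059287700239894906225079995468228930427402351685433315651762794572858915773833993123214953325112935505510400;
39787500842614992968416767061119916668029441821701141561171892540043086783624287736419888649920907573000722047385600;
145674952939966024613943207663900614317187971949882275885087435881773079938172576028527075713574908819573849959219200;
517537155156102215945100778927135737796811048450513973515054433326865125057649222682386028629586945918270881125990400;
1784974310851251132877483986886427503612336522129599421370186578122593722525756517878417347739888928687517776675635200;
5979442958364078570975379835850401203319587440768422870471942549009395574280015058213001834426523924582705904096051200;
19463556244094134227017640466906547343421933291227617963452153587378471928791070294290641387411548020829399637336064000;
61588729586894692328996516629431721237185926295728701984008271838494220654061869754464479892502815309699971796017152000;
189528190317394671390853617807813304688202266038402697065054921220842034927751088914723774748355292594763518870706176000;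
567423640342962715562824766835497350478250837306329538978018853241188337355662893069515946562293268521291951890081792000;
1653338072820597865536857662477793051218949922130403475687768251130339869169129694587549980847386904168185313948248064000;
4690170646458034134725195453529051607876879752825160476486997171582159962013040473824259420258581384173783025510231244800;
12957863061614685887349232206106011658121637110827991999479562029118401412507299721652498090816207145814411434595008512000;
34876606222069991717205384881136263879321218109566904491404887952670952317893141558389653886914516435065573388205064192000;
91479358709998400466936095102363787793382477711773379814411038413553074163227101357277304158527194011532293064064938803200;
233897728238608126620345195461683750767487010990151218550746249336414060750206108045572886784112379925917782978489935462400;
583126923262178647177727525868656995639526476259484225220095596852845475918932167503539559771740405927554275904005711462400;
1417911468517622246347619463952901414198231701924186538540430841023847205652373808529270060632536534280596108531268468736000;
3363516732849345359096810024652178720179431614109044744278675535450648247726563238388922703256118727967046340785210540032000;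
7785761091358833678533583574962468809475183446833107905015649342068310834990021739771816203707476007051837871271383426662400;
17590223050501144644744590663195130987438396838669852815335001094772569022160530566383110265410738311926462584013695995084800;
38797134125406925801303265556759744692846205733124593503260109525063183986656432167962140342268350449177475898879189660467200;
83555845301498478090561397900724137380655467624525587989590061505697314809091164928683744980653717399510059485589357933363200;
175747675469172294432319122101743962858823067641051508225219437448613304306860863753099165342702249081166459307471459241164800;
361094223024964269013175868482825322106206597809374691801525638122366486618269408032337876244307164932425937735153351378534400;
724850501367493876077250826296263335070652571179588002414060509945508985242098379700964764777967838288042457203361561269043200;
1421832080418138795134939104630206791143041312397928856943208499424777485138576293589996449239138683026345951219562708187545600;
2725784581938187766010273711647630620121284651919107079303939547723314162454348620107941483848254362293292941584363871305728000;
5107942598087243401592060227703957237544572326099121770779486290257791514690886845721469448250579179464254328315164802023424000;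
9357853795816103166127086465252721581987693488699407153516284069065835375253357768834845853740920955273924624371617350942720000;
16762681973923377426006114261141673848657823048644110153430987823230915323083225981825426570407300052329405731149278982255411200;
29363363595550174161099410312118520742197492045783183761011371267421358716626773371547071888108340162849352593896638076682240000;
50305803800886317861996181063433870217945869203895397444550198087520380745628518837764268643391451732460705356474676498792448000;
84300917372089894685945048812076066615246061272211624665757348947187788755676526911608835649058693467947557243240073200533504000;
138196615495885473916816713456752156585271624856281765306817107735200971695809642501818059874230612669217482603736309986361344000;
221645804052723532184456947318406289548235419385343526914272889734938806075126332435435131430494697838653608030377110477471744000;
347825892340850828680103718317348829896486240986153108203419338276932783106808220835542663926517777985105662606384977869799424000;
534127716315202760135593462442137424677827478338960308473876990148683784922892059206305422464518246079146049265402421161492480000;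
802688331222619263682995833112197441710332988227267631328376063567737317194028109076110839808338823557637103268945187573858304000;
1180599418813126434454723459930366421444742485104577887827181016537008317620166684753412837209963093726796065065137265829740544000;
1699591255448178816533871982651856178313611049803824442207892000303136919907086828736225304710717998713318689182177960598437888000;
2394984218698029273364915807427488612790181679971288098162570657010072707522352732598409483162572615242619896585937202211192832000;
3303729250338202680862149973759913013189845086001339272170895520538499597137368739813695362446758180284907284154740573361405952000;
4461436449756582190518618815021862012974822534835950715421086528691008343516188661449345556147169487600564032194542612815806464000;
5898421146402343062184220371928132247927690730862613981019722861938390742459349090179508566382965416671773778720015030905995264000;
7634972678477402823549508573349375988279081808215436821912403978801113952407052730552756339518882833533609690860175820337446912000;
9676252543770922572678491335336268131354666200170619435769488312943351988888764305275459659538307866431634571676780691151912960000;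
12007422155908236582646518004913899618880681102231590979010848202821225194662312793727169643437450198133600708995613661423730688000;
14589743292364240700311114757225281225123679661238727836215551734763311488508108021762384342712350289264408402317072046361673728000;
17358441952731252390532201820141603591853801777782534193954947491876759092978821571820208476942613189175353436200223330030059520000;
20223043164485584786960176577500425055594712773504488156388491861721478997499779015346201068294584390937499984448940269834862592000;
23070654764512573757435159104230711168935153030523121653353012188008366386364350915903337842295686548128265969263985346161410048000;
25772315609232698897806124337071030964726657397403783638560931030574614241746059205653388449404334773890409666752855981053444096000;
28192073217955494618882748657382095869989021141907207493958949517742599643001539069409300943526746913590465462389193130171695104000;
30197990170569836183201441707578377439078991794105670789869887515704472936365473408499195204558250348491203478131046327930322944000;
31673885363253664613960467540444332828696790244360435991192133451557353770474133879528795859408766979987076130639255666052562944000;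
32530380020049989229647586898798840278068306967322342128212697219179912128960009125138369455197689099152293098287307790806417408000;
32713800592823712113992277493064916584232709683612547179128648987090612287590901552226324395995141068663977993338476928994115584000;
32211713142846263088881382255665508957829922472516319414873925005195610818492543117491079770367500406229465836746858794166779904000;
31054300324093828785811813666844778519495648003336780740593297569702523003606873741333286097122370509501635988056114153792733184000;
29311371399443152954159190136779828310954216449191849681152337265467563623920601241544799239263825537697073546248406018555904000000;
27085415334137249119321365663034236551847948426021414891649917251930501488154913305481981028371706751356505945536308952443125760000;
24501655125401381619219097317420684054049056128174918617506189531141208780192197752398564455375744031455382638820342860280233984000;
21696441412183013361126437144120345644288833563627007086090733699580502853389027673660241949105610835802201248825583175991296000000;
18805474079662333020585940160856562317275613605189287588333001656407184906652564672821768430753017042999119578453949720979046400000;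
15953248577151436015312625098869217144815094737927102347548248655499851660978647412211094919180189117829404512006276661087567872000;
13244823333917365651611416515611997398027978194392423125026023023459651259186809372855371650101151528862070977834254842873249792000;
10760567355898741429694157219867354213041619863427082060989579081863948251059606327973185438580483803844806155284054241049575424000;
8554062935369443445120735379158218647546841054580810532499969972553832093622682133978098406137953208729546745596134185341288448000;
6652895566699394231802211578918425826104835172862878582646071047674714267526559071634591801787936030009115274930817722094714880000;
5061729997690126064127011968767857957155489442416152153104805238929330059172752356998189900011443979159925805402407504948756480000;
3766885371944496457506947425323357879561910721670572954684061807112966651877512017555921129373828740744481481731133960695578624000;
2741587708221566409408213679025828717306299518118794691272244006063920506648738376618584385732332680852981552984893234654216192000;
1951170292689475227002525955163843018730554107553015305091592581290437380751598984231144016409089732042728920260760394264477696000;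
1357669717185330170207076651306693986634774802053639219458637714538739925641417562215450112497516930934033798373001801074999296000;
923479181361673085348176159449095543388948483619804867997936789619780014530884867405204514445611602286542608025484108687736832000;
613928029426467265962232885123218017219681512360487606653212786637651160964098912993918915344440710147260025688605241762643968000;
398826102483501321663635597932929216854132112697566686219196796738276560484552171141610573714061207454741566966764883759071232000;
253127088199562838409392484056499006554523915821921049189587694383604780615841815710505041557573867364319175578611578598064128000;
156924341756489986497314637852900645622111305872510959707087217080128546680221660904490030881535256694599804484385424531259392000;
95003718800570747749458009690280186669312225440417659822270036062100082774119504108090727541977582785612723747834120663728128000;
56154606503223265426876869998531010612878937127790191471648319924841145730387576526952544891865214111565486489925892454744064000;
32397699111955160756146684977009089324469689027396425977418389599222554803671460681360893347871511926537543498389425575952384000;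
18239364167478895768103775111286958919543120709565582563399512588758774892056343042247417104946525085886960756484122070745088000;
10017228368552049817853391586570078501313944410165211915414167973413962455812281497424920318420612073139226327879159778377728000;
5365322618175123991392024505103800162296286603607219271334613876142930939625348435794126895462438552666680373983042934407168000;
2801653930071975665936224695588754658782293341640000500313862509065058165661851157922120703224175119950998576672489282207744000;
1425788029029269179260881054428205679557700683718855938780256195678974278257350533084473056894055667748786542853345110917120000;
706902651751496155168155522585170379374679616653722077873267699303005319517302321815432474250633698709189973095771086520320000;
341319467650240893545219527153769455095318365891214187471180400207248281924251750671053177671166527766106249536671896829952000;
160428513540893774779607842086233883978209055766500087201833461674349073927599636754442928105026780131425405851129996115968000;
73372318597522312351013421348389961374252883275072164351766249063800078873471479528487863911171640180840197754179926622208000;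
32637156714547894415043769478854392746525637342498371723779541883376539474305346913842967520231885902098238734625809629184000;
14112636859936386073273608943896568634734551064709969122437363465565409230158696455627824799818416376666576697417262956544000;
5929149067652620806825266250452039567447867911704474050171445035664922232723598800140828364219291134353682038402167341056000;
2418926071260311162751940959560992532658408903266982081838996020894743382446466567658088961311910351070760612979510607872000;
957724040679348070425108770567656955857787836814219190397150496112148964282312039630407817493563629916878485330553995264000;
367764503254829008652844876153805697194416548956005839795432861674998611145070644796988633085542061467212755755297931264000;
136872407098982113391335245659278745040882253346479700705626640081589862134829833967404937238026550840457577741884063744000;
49335895646265167157776282796993537244385818569801222536964203173041451308125259431902531592305690710865149520188014592000;
17209682235107195712516612803952368327872235700898220451404034844587331800722598415349344426777953457595899846022135808000;
5804733942643720493610078320258700709981134959405529255088390223460833636553003991016891197966364134529080275253592064000;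
1891477053387894210416332093693657137892140658174346802222817756681299695605043015978628950926453093952546226145591296000;
594851745565241235305278483455230267470197230486032877521245431632914164374769346959760238084807289882065416744861696000;
180364761338727167238587853247953475197656682917979004655621738560883006892798520331821174595484950688909832784707584000;
52667102169314519313447898552933511927795201181140252948670625869540148137723234052296566696165901011368343431544832000;
14792457297520438977910573572359036227576468614115933793318172998364656641985892779174091845877988120122615643766784000;
3990954655237739773549358932148101089189942368886055914216257245675884313382366011147104549711975834626146506375168000;
1032807905822950339975005991158593696296757208826656230559941875803102659067049898228242392857273162809417106718720000;
255965236507663466481733095948874569990629523894047876958130423126581929942000087581161156741402296640542670323712000;
60646713718807826331638692126542228109347358406541154143429557361699364927628762855500702849150691629167494037504000;
13710997829412724216155621574772923200406745272536338052136372030718675706184292706439885075760008888258343731200000;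
2951551116158239346524122812465426032746647743267006893573497741950241981683585921246838719284933089306534215680000;
603579948998334174683346054147124207113250336022500452066069731236505838626003054872405510735628425816902205440000;
116947187032003295596147114069282578169497086798805667957825850046870270058973019612246015296876101543693123584000;
21406504198988528988822382171344470824278684781152603180129298804630243837493680047074172751958267106655469568000;
3689533342316364965963394202845638815508868155496225385981588511931796616017364776277580512547707876316020736000;
596543636295925045668123153722418477668414892178497625525705866082949897459020788244097270884482103778476032000;
90094814272905675961725053795763653966988775639135380449320597173464953707792597824353734551770406225707008000;
12647361552031927218109700618380212494186313157420819141564908974001502342182521121755280048370705917542400000;
1640753637339883286347744121027263455815692393336459492365886868436361339360594595670289462897126328500224000;
195381146552234068532829138546770763964824304691885947492616596092909155094889856583649184465036349800448000;
21183284264275099207762323294007249244621496316597860867147249625789121930191686426225644589896066662400000;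
2070573102360577988019508770584149841997810366767224974353389180483554099776099734155016366187977113600000;
180243503781462091810866063522301311077259297609341811860092776112608050347715546309235806084794417152000;
13757542395720169928423167408306555815934862661493733158837613091650975409917600121395831977032024064000;
902107546586792328361287142586033767374721963738298848232368310933609786898963251572870722738978816000;
49414524684204331959988722416944901577040617329123915791021745930131265409641307001636239521611776000;
2171076819991210203845144275630874204192873978515019144480571384262924985352821427457353354051584000;
71739944003284226992716032054289915561872106119227144317109715113953103693570176684225548255232000;
1584976501181817711064764612163506756090872278280940595693116917709087986865088742667753357312000;
17562066495089392920385203458875421120120468457406543996599633437219811488809847564185632768000]%Z.
Definition Dcert2 : Z := 3718912235802892244559118503992665221405063174790073541476347394654208.
Definition betasZ2 : list Z := [
9652677101789050913641988575025201627341326464654982997625804602296179765;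
1882272034848864928160187772129914317331558660607721684537031897447755054175;
182580387380339898031538213896601688781161190078949003400092094052432240254975;
11745954063257398347735089679188763829113992880185026784808618314283111414621760;
563798471453951667400967204866124610321209368104141575184801557040625117885289520;
21536542087845329863336720806136845628683758894520094290928093354716612329953260720;
681960969136721965682817542263130180391256975065069197708569633009164734081766645200;
18411750189067097133860839668890782657622925034670149917213170500694564237354191677600;
432636781779464262606889034963267793863787382184683399743175502188531630768515846177840;
8988140834324366080337849580591737768801028023406572913146535609696741337065086415532080;
167153351132229409579067025956992006440971638546840551370524970382390901332369205440159280;
2810667422398790172212770536035889776907259795235972928238012684600384979447929731803655360;
43086630021671517114047037966328860759541650523904934594597791404269488743308895893024671040;
606353684898892735417118131905325261100543444132710616210393278953358919100521801665546824960;
7879932445718567593204178501626543875169722437189819938572202186695578339433786871723800867840;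
95046994525811881256801618655589525878922969875481689319451902541382409855834870901616576097920;
1068791603951112624648761842087789842696367105847444157539359954239590707940313373131665681356320;
11247885527008093217348158576294090731029590514765829371111404206789145697393213564543105743392480;
111163399927970665431800425144310136739546843619488256095595024894852768705264174027719586056355040;
1034886384943325998323236916528054951740331648055448818795535781145758081901916665943786532563738880;
9100229190993686770146998428240678981031720607189001093579680876295392671207009971475672489119683840;
75772549718322831836324163645604119470226541801862189034015395730637554723394304672744928318410150400;
598743950407914399473374956521619867460258756936941044741626726426097265362463258318760955971073241600;
4499061520181926438619588996664743816584863904892338794807229418834964114155361665694014246283939648000;
32207684730423746005391293691781285819031886606784497096852747001252504548695816844680642091000875464960;
220035010479906831276367095210774658948867872606105517025623000457465092162225501190383499137535557059840;
1436803241828595697193782383272417274258558687683331869389897025574550206727650254464775994963789484780800;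
8980527733117078046386920437889639870253545880594696849740935734029559182384811252232426862860452249666560;
53800251763379783856785998615158578429325682335124007860646080744670157533859552466501462247418438583987200;
309301078168009349643141446182518602053729632174493627943473545155249304851544954948926496902553414296002560;
1708410443339025564815987085580516405405264544022473573446807707848318845460012191398422868804807254102691840;
9075729215956606239672073748377946040929730904586103301619169131150245292604254979674902548713499365399500800;
46417671830963970570427124097891624636840767139244429065959073323213136275099513104941258872404128997626090240;
228772390917097338199516542501123650654701812080010027370597283367915692904812968173544100062934969271513657600;
1087483430376908876890676599403620719914657642159113296032273473616043554810603956483836440802010656650356650240;
4989964274575394719071448302325963543007329960195300322479035061569058935915011727107300650076470677594826321920;
22118899611087515634421556135021028649282757487913585226552772985648745762062020651065845629874883453978157342720;
94784373211170034516012967192273555264422255305382235722025173809125898675834646561416036568393732975420617953280;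
392929665022991255039485197632584120702529571952827582724861866371197091550245453288298723172967309174867949957120;
1576807561256198290927149093347359076364698354800720953659017582997956878984323019179637496857303048649753810206720;
6129059096680413603421470426111396299408666715583690132419982985069104987978647435718062874272806462436188608512000;
23089323697111988940363744231883142817110393523943984391909077160709740830604563934016299213870229287861756942499840;
84346793370001299203423827769015935568857110632105580784727216513730342765027566580769597039243016632699385323438080;
298944875771258478121254354553125882098099475078271063424452092671380214498861061339021524432981487824594599553433600;
1028471841919531361515677782145106711413992009479072455588667786859098079354866621982622440766050830149797850451968000;
3436174117003249891947908659443003805890268767515982452228445928713300829588711598253885510116519564290339848690401280;
11154032503525540105251833153272964612933561042548891995225432848484522355399103739658699486956452270202460373223014400;
35192133937663532374273335064996856970602751452362066296776873308342205658262010357831209494421078120411433837626982400;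
107966800691933442308849278658064639342035479204491433303549601812571953043021430396650942227178761510124227432652390400;
322204292067292094200963680389337349096954169947151098208558293038149204809205848201048133959873408408327174929897308160;
935677997156927012761598869354075783122934442749515363307534535531028763139732531354505591155359627038125068529289216000;
2644999139451702072459246771891693246133119550800614358001902969714534768242123465047982849365324966170360507420272885760;
7280673676829275060537332843006455368740063847889245203287204634566115397081175890737632221713666155008020342935902617600;
19520936614928945225593406066528619734660284096066136806237595055942416731415109732789743986845161122638737142100544716800;
50996753302173387831743551399767114891135907575916310650010220664079557475899446960404090533378223973585432826781340794880;
129843689970389643261264916343798862362841344377719376822094993408014733702254293008037273879925659553525256054635218862080;
322294934940876195666947193512966909437183893228459880132663244455403137569642852742091507946651200135933138998494070702080;
780104479787200110132163283643541301066716391229190561836354438316988048758314253154829791713230158497063439021903643279360;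
1841729360794158489206180352019578415573882807479900312945820061398061135513042649459799962752831794291723304457740477399040;
4242039034390902158316044933709922124295434172755782162111674001120856552855500782771576085319766761454205086405607819837440;
9534470274630891070489261058788866825281379519055562480874991850186596695814120157671336446660221654794947054600433505402880;
20916267143508697785601793713489606424084138342541329182753982386172160996270824228888545882274412719696021427258474092298240;
44794605360053515031447642245459950007287452202856647761905724376078410685206819276733029195301661831318077499243421195304960;
93670998110843220902445721398547328794464492737961647095506107763386152590258000393773199833993864574392726539181549436272640;
191294449027944026702985386392449069875092035431807527293292297796244831855054589186632331210609760892474874872344716849643520;
381586786481980541228021813881502580013514938734662080720537146455837990939051762497115501469777239796946120561115493164974080;
743618495657377156613915168022748596628824205787265252303108713761665410911548418338137030519872677283716641467746082482094080;
1415928825648278073457105842919744068400803886050295215537092960776493252925195217496824992837298417154698438498102738472140800;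
2634704957308546982227750252318329101151938307694680255893261278552688817518344295527296676322777531652391159604810894357299200;
4791631192177623336116959326855627872247061520162264154887864799851568478533078380083830831804658579591103457471429370576896000;
8518316612389077446939798034299057896165354219261046319718849298318307673988835915812382380164758140306973530750295657252126720;
14804648630651471150708045259070631310277428633652986295306904691290812436002326539887045759809127020256320769401452031639552000;
25157538350338329217683288354307580486711034328078885669328849980842322597939027248487807800846203920965605838460853614097203200;
41803496299642643042641191591548068608452671266578751122316827897849618779844384157319554984583132339210470903392278683294105600;
67932439167001371267966955161000567601775274548614309217575274143894778701444191209171666944867129715970280157264935884029952000;
107970407177706834429337048711383355699653520194395765718961839011881650736807490334897288908752432195504285182305306720191119360;
167855324493812249210303612008259642637449781808279525297067093795286936373346804536564065550083814952008019718421377031077888000;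
255273346932147581114867658490051836452114563024937792688934240644664485417922597991761656123836919014016217880788334906494156800;
379795792960977514467342384009663446249173486394994561607011194935974209903607218441891765446842839842338799890709034301810278400;
552841709599357532578189513196029384825483093678276292468073898592270208511286836335202991745438454417838381650387101065989324800;
787383673089664795321251014918639344795743050789252857731642853722318436675791699384885511618313944510246785199533700993347747840;
1097320026076672135337886268403935678398769354025841385370484664759908865481528228961955003729261522804405909237260149907521536000;
1496460446614320718891156605675577965725913911889652711203395690339701215062421604054074946937183489264902896204564442542086553600;
1997116417590875312360782495167046514193883621324297512431891655305998062852885995648666189971237045296384465379737953899684823040;
2608352811195138514202944862553371923052494477105927609889968840730881001321582158723587599801459906774162141096163014459292385280;
3334035155852464635537741221359196302114316383467535250318668627000927505087516990105287070263859129655231890415789050232727142400;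
4170887287505453475697161525969261019696601329294323341299943899551510831939683945703209365646647188874063889438344563019638374400;
5106839479875102808172733021104306921408303715151790401416101170584462958030384232436626378869079934067165406487600643672165580800;
6119979402089168093460399161737234391159003034337314880250192106669341641691178043239733509520118369319140197281021778058941562880;
7178401214856732522018965682777276124520969736869632183536906634818577547925765611681697702645611553246005150115658159541830287360;
8241172594716138803437632125812500197746973362436712083921513443079575522918463216464793235188824913692464038160535222021018091520;
9260507317134434035438810081010406434788749555621198827519600316954755716374402263087758750318618788607603485879039944558892810240;
10185057220242922966230857678931230016549559477583982267888625785543037937486915706470388163386475808209187681055630509797760040960;
10964049089776827103810333687512811036997753742457437477351625600124481578767489552377579533508750029770448554343433750312785018880;
11551824269571179914357387716366319093052648612689753464663926892619694421017663291106738120775102811607250523905758760900849827840;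
11912227323067900767426719888142054243578944873211324482201598380175470507794675870194186984657928483874225579299129963817929277440;
12022262878801539276350012836756576428121039477280838467524458930276619028574171137434166366477879678139829614195027525780268646400;
11874509776279943441566005964009300480633732005991589699014051906965469644215303992397258105348870953894949199255517207917389414400;
11477942156650358246517783839527370548118403502609422479706513467406243277995099663033051496407269171637505840237801836256847462400;
10857032230452890003677656638956129559444614629370049390934305685982732804420783784209376856795172183733754119352424294040563875840;
10049258756571002638237755275172153176428907116359030973030041167595895116177897077473105972646684882414910025180891012101392302080;
9101372796177336049695528923675340540591839142414626436097751178941914009897241951205332558660205990556555402408811822546996428800;
8064936689820206213650046712987649727324584922787345249014836304472568810692383475497249297969744606357317373042447019075541401600;
6991725796635979201783767545846783143591188404725615892206758389539849512363492652422732596047836634837623278212187176027815936000;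
5929557030118360752101206996339236425263378649092058242157600871380202796680426556780202489405386461061199685730926738464424591360;
4918995463557146918148806580612495908126618183315140537362833685339936786642958928623524858400443467534964330568913983343029125120;
3991218247612081080059530508464328763406233249866201119381158284242635667692018634248272757422012757029065107667103475727702425600;
3167120480334070271867251373702510917419505250782349010815899657636646853912879248200639295194932366765002215836499957379015639040;
2457567183204129226415207720207275544871833183455154953285441532940958226001159529172979826861706791707319202163434765540634132480;
1864558136423887181207732755748970059944044993130078372289197853281885398515943280769941623094338483062401536346065679260560916480;
1382994347761210959104795236794254334854758160146993416323663892936861176054803862692870874007257709163868021445515758643372359680;
1002718741125089596264043136299592245050573393032038590267438842521670061837625315929745266583777365107347094379719523011919872000;
710539669834905057110558481790657457763971812102325269888218467314477310971313817353531831275512022572291387329386723628946554880;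
492016832795836722125123773427086658278413313988378044346326234036415409219498027955705710893758959977107065479792159850296770560;
332875279722193320990376279523789545082232858369135675396839294276719106377570164406698738335673813238311317968426233266794659840;
219996591709372694982866173598970951951804990557987644662691827174422179374420931087127752573073422701499175690289156422809681920;
142004201182954889349897315134028718163332666758293543433905175019042124772096539563555003816449993593410360162713865867870863360;
89505592383563121229866371046710000439125607628536342631679493920164984729303370797760399396547980088893930279946467359252807680;
55077019764823998905261124582645427513924936957069307659791877519198058045041169510917421513660493578725761973843130426893271040;
33079876800903521841023635947987197014180173019302387147772848037658506042908969407240770621070850250761011088104242546653265920;
19387708864476591623768272936206030845991262480643179853265643496536250800685541354097122218192673923315455813884629770662051840;
11085312613192162281619435647982996652998026562540481296348087902549520072643835477813683920867716238705496990036422483456819200;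
6181748265582700759507618960129012141095636589662366772198604608473168379564275400712790516042675779043753727044540395893555200;
3361186796464130359487203487356600619392598885775080586909421635216144196059152644339925247203520576485406132816128597242675200;
1781396313082873546086387072906695990538798069498603327821245574859346212735646861402678443052224383884045844810201037086392320;
919974341150517953023505599025966039162656181756614439720959377654129445960568923090845497188201547617058589817014253120389120;
462796889252881904733422942294245648877285959627024499567611936616538016048928208278553400276585801978941843524782731873484800;
226698171592191595567885317549217180188296307670541993873160189714933494394137865568007887695131547007183278414611396060774400;
108089179064396503231022866610190123591291141508271512034674941215339836068807310031854851987336171694578703851608946927206400;
50143718679868766835689987497235778817128631337816704128529886548876568767856201115038194525991984599887309857153982167777280;
22623693424894176278802403301850587855684440233701524423703318626750063974201668957062113862989453121364148929721734245908480;
9922563161754083389662760774193531615574883523038755425590713655920264509015881266479565597874724060197440630501893210112000;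
4228493876602848611007595952616772341603873368720446228584892119369192888596989797722798161228225132683740766455181575454720;
1749941048322902689509965588312711471526996891318290253516141754772905462772604199598744807442683747222599911433223232552960;
702905045236360160312891301900542406672186488583225949061119988751135780192268394734982576706301327290716436888023445012480;
273872928614995425866560845572719551360174294046285449337495916090368271833377704650360576054029492342534736525353906339840;
103444425504681627762846205033072533547696708676482570061774494288713647872609797915925903214974672742198646741125195366400;
37851064784791405261155967465609688604981600508212115415578403502438885623193612509794866087823436157487838547831045488640;
13407538596922840838806829615783113649296836263650021310235568396931909981255713620363880187090760968400824635972984504320;
4593930310970755537935765405084852743177355275548787209278739248595013580549071184070336754339677414566515389802269900800;
1521331816496612103450705892305375643710127929806198929642548384581454204532137607955594211686889692457171561798036357120;
486497268510800531297067666785059242742460087651781693039855918648188219664205310987853906990941803165009302423758438400;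
150084765910255891672609016567402135381192534046729401746130723123874651929149727669456282338808276426982520422892830720;
44621312157110537847309931607706326723327721125759707065563158282962083103323190245534042682768971982283790105507266560;
12770580451705137651193920771352696312588627006818254557137394999872759147867163051040938002581185457222761011090554880;
3514096190024688315485526408211480720253187148389518976970634540704975304717848901410034721046430836199607851695472640;
928490992377084056397161024855425047540094529605505190686113692824939852321215838096093069970476271690780687256780800;
235221841825739449835269599897548981056533379128771168534703616083617253482224734310658214519872964821210664167014400;
57046661489550760693075164674998771391963998220056989460166041864963318563731114080576866254965515409410952160870400;
13221667284506922728736437179099493542833518173920910268925458229495965385881839732817221746754990634772575268372480;
2922948135363259870342077109252987121387652025004305723636149428489376864299588530360471371192309928387979457331200;
615069180310214915207290692875338831886669742162574927531785036459394349871317648527079182780038538065656099635200;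
122909095545061317246682458631739309218781722590904531196058388634422087232449863735987351180018198156492668928000;
23263459780183568762481215893974284567002072346252645852555608805495627872907685494565634445613082250573355417600;
4158450340602070276043358669185265250230400399225568307174773353504793021117463193747019655114480068623828254720;
699730902444645442700322140680979754738911315200077919496385394778430459275476185712957303076252189688279859200;
110421966832767138740017477791445713091809532193740955237469162285512546123043793060503144374444539218021580800;
16272502065266985291899269077660236798212777417262395551678378180346686015803413394091037618204762360491540480;
2228393924417755674719446495394935776100881525250285505387643755102191165641235293170053665688893469407313920;
281954203875379092691844872981391241879571833678038815026604988654742208514339568236458398965418726764052480;
32739890521379728090501635760420385029338620474183121534754310720736166969915026295364416938456498579701760;
3460790002280683340694840476369560983062660233912959840509897387210407689311841667356284412432731445657600;
329762515829008739284941149917360137803528638589153137644425370641867921500239359326290272184354744565760;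
27980518917886194406912537542599889726936503822658163958134863160745449152263451003112916765855333744640;
2081597269261158183734540733033608486812478561082941362070649521771623882716559487243350929733236817920;
133035852906319845804792739991251182393493729570658152079486730549768361624152771198500595470927134720;
7102946775138119675003542115611611969380590598520502555419144354643434921294911411833145087471124480;
304214923645091290373810864091422144917479674007548390526275027645090947677255739555137740970393600;
9800997010118469789233459556848886073866527051354948748137516563759901858615731909301181297459200;
211183849603449949867632071592976938969448633200313691559110592082568233152938416959332234035200;
2283068644361621079650076449653804745615660899462850719557952346838575493545280183344132259840]%Z.

Lemma cert1_ok : cert_check (linQ 200 (fst (vcdQ 25)) (-190) (snd (vcdQ 25))) Dcert (certP 18 24 betasZ) = true.
Proof. vm_compute. reflexivity. Qed.
Lemma cert2_ok : cert_check (snd (vcdQ 25)) Dcert2 (certP 18 25 betasZ2) = true.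
Proof. vm_compute. reflexivity. Qed.
Lemma betas_ok : forallb (Z.leb 0) betasZ = true.
Proof. vm_compute. reflexivity. Qed.
Lemma betas2_ok : forallb (Z.leb 0) betasZ2 = true.
Proof. vm_compute. reflexivity. Qed.

Lemma PQ_es_nonneg t : 0 <= t -> 0 <= 200 * es (vc 25) t + (-190) * es (vd 25) t.
Proof.
  intros Ht. rewrite <- es_lin.
  destruct (rel_vcd 25) as [Hc Hd].
  pose proof (rel_lin 200 _ (-190) _ _ _ Hc Hd) as Hr. rewrite !Q2R_lit in Hr.
  eapply cert_es; [exact Hr | exact cert1_ok | exact betas_ok | vm_compute; reflexivity | exact Ht].
Qed.

Lemma d25_es_nonneg t : 0 <= t -> 0 <= es (vd 25) t.
Proof.
  intros Ht. destruct (rel_vcd 25) as [Hc Hd].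
  eapply cert_es; [exact Hd | exact cert2_ok | exact betas2_ok | vm_compute; reflexivity | exact Ht].
Qed.

Lemma cont_eps (f : R -> R) x : continuous f x ->
  forall eps, 0 < eps -> exists delta, 0 < delta /\ forall y, Rabs (y - x) < delta -> Rabs (f y - f x) < eps.
Proof.
  intros Hc eps He. apply continuity_pt_filterlim in Hc.
  destruct (Hc eps He) as [al [Hal H]]. exists al; split; auto. intros y Hy.
  destruct (Req_dec y x) as [->|Hne]. unfold Rminus; rewrite Rplus_opp_r, Rabs_R0; auto.
  apply H. split. split; [constructor|auto]. exact Hy.
Qed.

Lemma eps_cont (f : R -> R) x :
  (forall eps, 0 < eps -> exists delta, 0 < delta /\ forall y, Rabs (y - x) < delta -> Rabs (f y - f x) < eps) ->
  continuous f x.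
Proof.
  intros H. apply continuity_pt_filterlim. intros eps He. destruct (H eps He) as [d [Hd Hy]].
  exists d; split; auto. intros y [_ Hy']. apply Hy. exact Hy'.
Qed.

Definition ext0 (h : R -> R) (u : R) := h (Rmax 0 u).

Lemma Rmax_lip y u : Rabs (Rmax 0 y - Rmax 0 u) <= Rabs (y - u).
Proof. unfold Rmax. destruct (Rle_dec 0 y), (Rle_dec 0 u); unfold Rabs;
  repeat destruct (Rcase_abs _); lra. Qed.

Lemma ext0_cont h : cont_halfline h -> forall u, continuous (ext0 h) u.
Proof.
  intros Hh u. apply eps_cont. intros eps He.
  destruct (Hh (Rmax 0 u) (Rmax_l 0 u) eps He) as [d [Hd H]].
  exists d; split; auto. intros y Hy. unfold ext0. apply H. apply Rmax_l.
  pose proof (Rmax_lip y u); lra.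
Qed.

Lemma extr f l : is_RInt_gen f (at_point 0) (Rbar_locally p_infty) l ->
  is_lim (fun T => RInt f 0 T) p_infty l.
Proof.
  intros H P HP. specialize (H P HP).
  destruct H as [Qa Qb HQa HQb HQ]. unfold at_point in HQa.
  destruct HQb as [M HM]. exists M. intros T HT.
  destruct (HQ 0 T HQa (HM T HT)) as [y [Hy Py]]. simpl in Hy.
  rewrite (is_RInt_unique _ _ _ _ Hy). exact Py.
Qed.

Lemma contR_mult (f g : R -> R) x : continuous f x -> continuous g x -> continuous (fun y => f y * g y) x.
Proof. intros; exact (continuous_mult (K := R_AbsRing) f g x H H0). Qed.
Lemma contR_plus (f g : R -> R) x : continuous f x -> continuous g x -> continuous (fun y => f y + g y) x.
Proof. intros; exact (continuous_plus (V := R_NormedModule) f g x H H0). Qed.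
Lemma cont_expl c x : continuous (fun u => exp (- (c * u))) x.
Proof. apply (ex_derive_continuous (V := R_NormedModule)). auto_derive; auto. Qed.
Lemma derR_mult (f g : R -> R) x df dg : is_derive f x df -> is_derive g x dg ->
  is_derive (fun y => f y * g y) x (df * g x + f x * dg).
Proof. intros H1 H2. exact (is_derive_mult (K := R_AbsRing) f g x df dg H1 H2 Rmult_comm). Qed.
Lemma exRInt_cont (f : R -> R) a b : (forall u, continuous f u) -> ex_RInt f a b.
Proof. intros H. apply (ex_RInt_continuous (V := R_CompleteNormedModule)). intros; apply H. Qed.

Lemma lap_hh h s0 : cont_halfline h ->
  (forall xi, s0 < xi -> is_RInt_gen (fun t => exp (- (xi * t)) * h t) (at_point 0) (Rbar_locally p_infty) 0) ->
  forall xi, s0 < xi -> is_lim (fun T => RInt (fun u => exp (- (xi * u)) * ext0 h u) 0 T) p_infty 0.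
Proof.
  intros Hh Hl xi Hxi. apply extr.
  apply (is_RInt_gen_ext (fun t => exp (- (xi * t)) * h t)); [|apply Hl; auto].
  apply (Filter_prod _ _ _ (fun a => a = 0) (fun b => 0 < b)).
  - reflexivity.
  - exists 0. auto.
  - intros x y -> Hy u Hu. simpl in Hu. rewrite Rmin_left, Rmax_right in Hu by lra.
    unfold ext0. rewrite Rmax_right by lra. reflexivity.
Qed.

Definition gfun h a u := exp (- (a * u)) * ext0 h u.
Definition HH h a T := RInt (gfun h a) 0 T.

Lemma gfun_cont h a : cont_halfline h -> forall u, continuous (gfun h a) u.
Proof. intros Hh u. apply contR_mult. apply cont_expl. apply ext0_cont; auto. Qed.

Lemma HH_derive h a : cont_halfline h -> forall T, is_derive (HH h a) T (gfun h a T).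
Proof.
  intros Hh T. apply (is_derive_RInt (V := R_NormedModule) (gfun h a) (HH h a) 0 T).
  - apply filter_forall. intros b. unfold HH. apply (RInt_correct (V := R_CompleteNormedModule)).
    apply exRInt_cont. apply gfun_cont; auto.
  - apply gfun_cont; auto.
Qed.

Lemma HH_cont h a : cont_halfline h -> forall T, continuous (HH h a) T.
Proof. intros Hh T. apply (ex_derive_continuous (V := R_NormedModule)). eexists. apply HH_derive; auto. Qed.

Lemma HH_0 h a : HH h a 0 = 0.
Proof. unfold HH. apply (RInt_point (V := R_CompleteNormedModule)). Qed.

Lemma claimB h s0 : cont_halfline h ->
  (forall xi, s0 < xi -> is_RInt_gen (fun t => exp (- (xi * t)) * h t) (at_point 0) (Rbar_locally p_infty) 0) ->
  forall c, 0 < c -> is_lim (fun T => RInt (fun u => exp (- (c * u)) * HH h (Rabs s0 + 1) u) 0 T) p_infty 0.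
Proof.
  intros Hh Hl c Hc. set (a := Rabs s0 + 1).
  assert (Ha : s0 < a) by (unfold a; pose proof (Rle_abs s0); lra).
  assert (Hint : forall T, RInt (fun u => exp (- (c * u)) * HH h a u) 0 T =
     (RInt (fun u => exp (- ((a + c) * u)) * ext0 h u) 0 T - exp (- (c * T)) * HH h a T) / c).
  { intros T.
    set (df := fun u => (- c * exp (- (c * u))) * HH h a u + exp (- ((a + c) * u)) * ext0 h u).
    assert (HD : forall u, is_derive (fun u => exp (- (c * u)) * HH h a u) u (df u)).
    { intros u. eapply is_derive_ext; [intros; reflexivity|].
      replace (df u) with ((- c * exp (- (c * u))) * HH h a u + exp (- (c * u)) * gfun h a u).
      apply (derR_mult (fun u => exp (- (c * u))) (HH h a)). auto_derive; auto; ring. apply HH_derive; auto.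
      unfold df, gfun. rewrite <- Rmult_assoc, <- exp_plus. f_equal. f_equal. f_equal. ring. }
    assert (HI := is_RInt_derive (V := R_CompleteNormedModule) _ df 0 T (fun u _ => HD u)).
    assert (Hcd : forall u, continuous df u).
    { intros u. unfold df. apply contR_plus; apply contR_mult.
      apply (ex_derive_continuous (V := R_NormedModule)); auto_derive; auto.
      apply HH_cont; auto. apply cont_expl. apply ext0_cont; auto. }
    specialize (HI (fun u _ => Hcd u)). apply is_RInt_unique in HI.
    unfold minus, plus, opp in HI; simpl in HI. rewrite HH_0 in HI.
    unfold df in HI.
    rewrite (RInt_plus (V := R_CompleteNormedModule)) in HI.
    2: { apply exRInt_cont. intros u. apply contR_mult. apply (ex_derive_continuous (V := R_NormedModule)); auto_derive; auto. apply HH_cont; auto. }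
    2: { apply exRInt_cont. intros u. apply contR_mult. apply cont_expl. apply ext0_cont; auto. }
    assert (E : RInt (fun x => - c * exp (- (c * x)) * HH h a x) 0 T = - c * RInt (fun u => exp (- (c * u)) * HH h a u) 0 T).
    { rewrite <- (RInt_scal (V := R_CompleteNormedModule)).
      apply RInt_ext. intros; unfold scal; simpl; unfold mult; simpl; ring.
      apply exRInt_cont. intros u. apply contR_mult. apply cont_expl. apply HH_cont; auto. }
    rewrite E in HI. unfold plus in HI; simpl in HI.
    set (X := RInt (fun u => exp (- (c * u)) * HH h a u) 0 T) in *.
    set (B := RInt (fun u => exp (- ((a + c) * u)) * ext0 h u) 0 T) in *.
    set (C := exp (- (c * T)) * HH h a T) in *.
    unfold Rdiv. apply (Rmult_eq_reg_l c); [|lra].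
    replace (c * ((B - C) * / c)) with (B - C) by (field; lra). lra. }
  apply (is_lim_ext (fun T => (RInt (fun u => exp (- ((a + c) * u)) * ext0 h u) 0 T - exp (- (c * T)) * HH h a T) * / c)).
  { intros T. rewrite Hint. reflexivity. }
  replace (Finite 0) with (Rbar_mult (Rbar_minus 0 (Rbar_mult 0 0)) (/ c)) by (simpl; f_equal; ring).
  apply is_lim_scal_r. apply (is_lim_minus _ _ _ 0 (Rbar_mult 0 0)).
  - apply (lap_hh h s0); auto. lra.
  - apply is_lim_mult. apply lim_expm; auto. 
    assert (HL := lap_hh h s0 Hh Hl a Ha). exact HL.
    simpl; auto.
  - simpl. unfold is_Rbar_minus, is_Rbar_plus. simpl. repeat f_equal. all: try ring.
Qed.

Lemma arch_nat r : exists n : nat, r < INR n.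
Proof.
  destruct (Rle_dec r 0). exists 1%nat. simpl; lra.
  destruct (archimed r) as [H1 H2]. exists (Z.to_nat (up r)).
  rewrite INR_IZR_INZ, Z2Nat.id. lra.
  apply le_IZR. lra.
Qed.

Lemma bernoulli x k : 0 <= x -> 1 + INR k * x <= (1 + x) ^ k.
Proof.
  intros Hx. induction k. simpl; lra.
  rewrite S_INR. simpl. pose proof (pos_INR k). nra.
Qed.

Ltac req := match goal with |- ?a = ?b => change (@eq R a b) end.

Section Mom.
Variable phi : R -> R.
Hypothesis phi_cont : forall u, continuous phi u.

Definition Zp (q : R -> R) := (forall u, continuous q u) /\
  forall n : nat, (1 <= n)%nat -> is_lim (fun T => RInt (fun u => exp (- (INR n * u)) * (q u * phi u)) 0 T) p_infty 0.

Lemma Zp_ext q1 q2 : (forall u, q1 u = q2 u) -> Zp q1 -> Zp q2.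
Proof.
  intros E [Hc Hl]. split.
  - intros u. apply (continuous_ext q1 q2); auto.
  - intros n Hn. apply (is_lim_ext (fun T => RInt (fun u => exp (- (INR n * u)) * (q1 u * phi u)) 0 T)); auto.
    intros T. apply RInt_ext. intros. req. rewrite E. reflexivity.
Qed.

Lemma Zp_shift q : Zp q -> Zp (fun u => exp (- u) * q u).
Proof.
  intros [Hc Hl]. split.
  - intros u. apply contR_mult; auto. apply (cont_expl 1 u) || (apply (continuous_ext (fun u => exp (- (1 * u)))); [intros; rewrite Rmult_1_l; reflexivity | apply cont_expl]).
  - intros n Hn. apply (is_lim_ext (fun T => RInt (fun u => exp (- (INR (S n) * u)) * (q u * phi u)) 0 T)).
    + intros T. apply RInt_ext. intros x _. rewrite S_INR.
      req. replace (exp (- ((INR n + 1) * x))) with (exp (- (INR n * x)) * exp (- x)) by (rewrite <- exp_plus; f_equal; ring).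
      ring.
    + apply Hl. lia.
Qed.

Lemma Zp_lin a q1 b q2 : Zp q1 -> Zp q2 -> Zp (fun u => a * q1 u + b * q2 u).
Proof.
  intros [Hc1 Hl1] [Hc2 Hl2]. split.
  - intros u. apply contR_plus; apply contR_mult; auto; apply continuous_const.
  - intros n Hn.
    assert (Hi : forall q, (forall u, continuous q u) -> forall T, ex_RInt (fun u => exp (- (INR n * u)) * (q u * phi u)) 0 T).
    { intros q Hq T. apply exRInt_cont. intros u. apply contR_mult. apply cont_expl. apply contR_mult; auto. }
    apply (is_lim_ext (fun T => a * RInt (fun u => exp (- (INR n * u)) * (q1 u * phi u)) 0 T +
                                b * RInt (fun u => exp (- (INR n * u)) * (q2 u * phi u)) 0 T)).
    + intros T. rewrite <- (RInt_scal (V := R_CompleteNormedModule)) by auto.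
      rewrite <- (RInt_scal (V := R_CompleteNormedModule)) by auto.
      rewrite <- (RInt_plus (V := R_CompleteNormedModule)).
      apply RInt_ext. intros. unfold plus, scal; simpl; unfold mult; simpl; ring.
      apply (ex_RInt_scal (V := R_NormedModule)); auto.
      apply (ex_RInt_scal (V := R_NormedModule)); auto.
    + replace (Finite 0) with (Rbar_plus (Rbar_mult a 0) (Rbar_mult b 0)) by (simpl; f_equal; ring).
      apply (is_lim_plus _ _ _ (Rbar_mult a 0) (Rbar_mult b 0)).
      apply is_lim_scal_l; auto. apply is_lim_scal_l; auto.
      simpl. unfold is_Rbar_plus; simpl. reflexivity.
Qed.

Lemma Zp_poly al be ga q : Zp q ->
  Zp (fun u => (al + be * exp (- u) + ga * (exp (- u) * exp (- u))) * q u).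
Proof.
  intros Hq.
  apply (Zp_ext (fun u => 1 * (al * q u + be * (exp (- u) * q u)) + ga * (exp (- u) * (exp (- u) * q u)))).
  intros; ring.
  apply Zp_lin. apply Zp_lin; auto. apply Zp_shift; auto. apply Zp_shift, Zp_shift; auto.
Qed.

Lemma Zp_pow al be ga k : Zp (fun _ => 1) ->
  Zp (fun u => (al + be * exp (- u) + ga * (exp (- u) * exp (- u))) ^ k).
Proof.
  intros H1. induction k.
  - simpl. auto.
  - apply (Zp_ext (fun u => (al + be * exp (- u) + ga * (exp (- u) * exp (- u))) *
                            (al + be * exp (- u) + ga * (exp (- u) * exp (- u))) ^ k)).
    intros; simpl; ring. apply Zp_poly; auto.
Qed.

Lemma int_expm T : RInt (fun u => exp (- u)) 0 T = 1 - exp (- T).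
Proof.
  assert (HI := is_RInt_derive (V := R_CompleteNormedModule) (fun u => - exp (- u)) (fun u => exp (- u)) 0 T).
  apply is_RInt_unique in HI.
  rewrite HI. unfold minus, plus, opp; simpl. rewrite Ropp_0, exp_0. ring.
  intros x _. auto_derive; auto; ring.
  intros x _. apply (continuous_ext (fun u => exp (- (1 * u)))). intros; rewrite Rmult_1_l; auto. apply cont_expl.
Qed.

Lemma mom_main B u0 : (forall u, 0 <= u -> Rabs (phi u) <= B) -> Zp (fun _ => 1) -> 0 < u0 -> phi u0 <= 0.
Proof.
  intros HB H1 Hu0. destruct (Rle_dec (phi u0) 0) as [|Hpos]; auto. exfalso.
  apply Rnot_le_lt in Hpos.
  set (m := phi u0 / 2).
  assert (HBp : 0 <= B) by (pose proof (HB u0 (Rlt_le _ _ Hu0)); pose proof (Rabs_pos (phi u0)); lra).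
  destruct (cont_eps phi u0 (phi_cont u0) m ltac:(unfold m; lra)) as [d1 [Hd1 Hphi]].
  set (de := Rmin (d1 / 2) (u0 / 2)).
  assert (Hde : 0 < de) by (unfold de; apply Rmin_pos; lra).
  assert (Hde1 : de <= d1 / 2) by apply Rmin_l.
  assert (Hde2 : de <= u0 / 2) by apply Rmin_r.
  assert (Hnear_phi : forall u, Rabs (u - u0) <= de -> m < phi u).
  { intros u Hu. specialize (Hphi u ltac:(lra)). apply Rabs_lt_between in Hphi. unfold m in *. lra. }
  set (x0 := exp (- u0)).
  set (r1 := x0 - exp (- (u0 + de))).
  set (r2 := exp (- (u0 - de)) - x0).
  assert (Hr1 : 0 < r1) by (unfold r1, x0; assert (exp (- (u0 + de)) < exp (- u0)) by (apply exp_increasing; lra); lra).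
  assert (Hr2 : 0 < r2) by (unfold r2, x0; assert (exp (- u0) < exp (- (u0 - de))) by (apply exp_increasing; lra); lra).
  set (rho := Rmin r1 r2).
  assert (Hrho : 0 < rho) by (apply Rmin_pos; auto).
  assert (Hx0 : 0 < x0 < 1) by (unfold x0; split; [apply exp_pos| rewrite <- exp_0; apply exp_increasing; lra]).
  assert (Hrho1 : rho <= 1).
  { assert (rho <= r1) by apply Rmin_l. unfold r1 in *. pose proof (exp_pos (- (u0 + de))). lra. }
  assert (Hfar : forall u, 0 <= u -> de <= Rabs (u - u0) -> rho <= Rabs (exp (- u) - x0)).
  { intros u Hu Hd. assert (rho <= r1) by apply Rmin_l. assert (rho <= r2) by apply Rmin_r.
    destruct (Rle_dec u u0).
    - rewrite Rabs_left1 in Hd by lra.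
      assert (exp (- (u0 - de)) <= exp (- u)).
      { destruct (Req_dec u (u0 - de)) as [->|]. lra. apply Rlt_le, exp_increasing. lra. }
      rewrite Rabs_right; unfold r2 in *; lra.
    - rewrite Rabs_right in Hd by lra.
      assert (exp (- u) <= exp (- (u0 + de))).
      { destruct (Req_dec u (u0 + de)) as [->|]. lra. apply Rlt_le, exp_increasing. lra. }
      rewrite Rabs_left1; unfold r1 in *; lra. }
  destruct (cont_eps (fun u => exp (- u)) u0
     ltac:(apply (continuous_ext (fun u => exp (- (1 * u)))); [intros; rewrite Rmult_1_l; auto | apply cont_expl])
     (rho / 2) ltac:(lra)) as [d2 [Hd2 Hexp]].
  set (d3 := Rmin de d2 / 2).
  assert (Hd3 : 0 < d3) by (unfold d3; pose proof (Rmin_pos de d2 Hde Hd2); lra).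
  assert (Hd3a : d3 < de) by (unfold d3; pose proof (Rmin_l de d2); lra).
  assert (Hd3b : d3 < d2) by (unfold d3; pose proof (Rmin_r de d2); pose proof (Rmin_pos de d2 Hde Hd2); lra).
  set (q := fun u => (1 + rho ^ 2 / 2 - x0 ^ 2) + (2 * x0) * exp (- u) + (-1) * (exp (- u) * exp (- u))).
  assert (Hq : forall u, q u = 1 + rho ^ 2 / 2 - (exp (- u) - x0) ^ 2) by (intros; unfold q; ring).
  assert (Hq0 : forall u, 0 <= u -> 0 <= q u).
  { intros u Hu. rewrite Hq. assert (0 < exp (- u) <= 1).
    { split. apply exp_pos. rewrite <- exp_0. destruct (Req_dec u 0) as [->|]. rewrite Ropp_0; lra. apply Rlt_le, exp_increasing; lra. }
    assert ((exp (- u) - x0) ^ 2 <= 1) by nra. nra. }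
  assert (Hqfar : forall u, 0 <= u -> de <= Rabs (u - u0) -> q u <= 1).
  { intros u Hu Hd. rewrite Hq. specialize (Hfar u Hu Hd).
    assert (rho ^ 2 <= (exp (- u) - x0) ^ 2).
    { rewrite <- (pow2_abs (exp (- u) - x0)). apply pow_incr. lra. }
    nra. }
  set (La := 1 + rho ^ 2 / 4).
  assert (Hqnear : forall u, Rabs (u - u0) <= d3 -> La <= q u).
  { intros u Hu. rewrite Hq. specialize (Hexp u ltac:(lra)).
    assert ((exp (- u) - x0) ^ 2 <= (rho / 2) ^ 2).
    { rewrite <- (pow2_abs (exp (- u) - x0)). apply pow_incr. split. apply Rabs_pos. unfold x0 in *. lra. }
    unfold La. nra. }
  set (E0 := exp (- (u0 + de))).
  assert (HE0 : 0 < E0) by apply exp_pos.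
  assert (Hm : 0 < m) by (unfold m; lra).
  assert (HE0d : E0 = exp (- (u0 + de))) by reflexivity.
  clearbody m E0 d3.
  destruct (arch_nat ((B + 2) / (2 * d3 * E0 * m * (rho ^ 2 / 4)))) as [k Hk].
  assert (Hrho2 : 0 < rho ^ 2 / 4) by (pose proof (pow_lt rho 2 Hrho); lra).
  assert (HLk : B + 2 <= 2 * d3 * (E0 * La ^ k * m)).
  { pose proof (bernoulli (rho ^ 2 / 4) k ltac:(lra)) as Hb. fold La in Hb.
    assert (Hpos2 : 0 < 2 * d3 * E0 * m * (rho ^ 2 / 4)).
    { apply Rmult_lt_0_compat; [|exact Hrho2]. apply Rmult_lt_0_compat; [|exact Hm]. apply Rmult_lt_0_compat; [|exact HE0]. lra. }
    apply (Rmult_lt_compat_r (2 * d3 * E0 * m * (rho ^ 2 / 4))) in Hk; auto.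
    unfold Rdiv at 1 in Hk. rewrite Rmult_assoc, Rinv_l, Rmult_1_r in Hk by lra.
    assert (0 <= 2 * d3 * E0 * m) by (apply Rmult_le_pos; [|lra]; apply Rmult_le_pos; lra).
    assert (2 * d3 * E0 * m * (INR k * (rho ^ 2 / 4)) <= 2 * d3 * E0 * m * La ^ k).
    { apply Rmult_le_compat_l; auto. pose proof (pos_INR k). lra. }
    nra. }
  pose proof (Zp_pow (1 + rho ^ 2 / 2 - x0 ^ 2) (2 * x0) (-1) k H1) as [Hcq Hlq].
  fold q in Hcq, Hlq.
  specialize (Hlq 1%nat (le_n 1)).
  apply filterlim_locally with (eps := mkposreal 1 Rlt_0_1) in Hlq.
  destruct Hlq as [M HM].
  set (T := Rmax (M + 1) (u0 + de) + 1).
  assert (HT1 : M < T) by (unfold T; pose proof (Rmax_l (M + 1) (u0 + de)); lra).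
  assert (HT2 : u0 + de < T) by (unfold T; pose proof (Rmax_r (M + 1) (u0 + de)); lra).
  specialize (HM T HT1).
  set (I := fun u => exp (- (INR 1 * u)) * (q u ^ k * phi u)).
  change (Rabs (RInt I 0 T - 0) < 1) in HM.
  rewrite Rminus_0_r in HM. apply Rabs_lt_between in HM.
  set (J := fun u => I u + B * exp (- u)).
  assert (HcI : forall u, continuous I u).
  { intros u. unfold I. apply contR_mult. apply cont_expl. apply contR_mult; auto. }
  assert (HcE : forall u, continuous (fun u => exp (- u)) u).
  { intros u. apply (continuous_ext (fun u => exp (- (1 * u)))). intros; rewrite Rmult_1_l; auto. apply cont_expl. }
  assert (HcJ : forall u, continuous J u).
  { intros u. unfold J. apply contR_plus; auto. apply contR_mult; auto. apply continuous_const. }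
  assert (HJ0 : forall u, 0 <= u -> 0 <= J u).
  { intros u Hu. unfold J, I. replace (INR 1 * u) with u by (simpl; ring).
    pose proof (exp_pos (- u)).
    destruct (Rle_dec (Rabs (u - u0)) de).
    - pose proof (Hnear_phi u r). pose proof (pow_le (q u) k (Hq0 u Hu)).
      assert (0 <= exp (- u) * (q u ^ k * phi u)) by (apply Rmult_le_pos; [lra|apply Rmult_le_pos; lra]).
      nra.
    - assert (0 <= q u ^ k <= 1).
      { split. apply pow_le, Hq0; auto. rewrite <- (pow1 k). apply pow_incr. split. apply Hq0; auto.
        apply Hqfar; auto. apply Rnot_le_lt in n. lra. }
      pose proof (HB u Hu). pose proof (Rabs_pos (phi u)).
      assert (- B <= q u ^ k * phi u).
      { destruct H0 as [Hk0 Hk1]. destruct (Rle_dec 0 (phi u)).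
        assert (0 <= q u ^ k * phi u) by (apply Rmult_le_pos; auto). lra.
        rewrite Rabs_left in H2 by lra.
        assert (0 <= (1 - q u ^ k) * (- phi u)) by (apply Rmult_le_pos; lra). lra. }
      nra. }
  assert (HJnear : forall u, Rabs (u - u0) <= d3 -> E0 * La ^ k * m <= J u).
  { intros u Hu. unfold J, I. replace (INR 1 * u) with u by (simpl; ring).
    assert (Hu0' : 0 <= u) by (apply Rabs_le_between in Hu; lra).
    assert (E0 <= exp (- u)).
    { rewrite HE0d. destruct (Req_dec u (u0 + de)) as [->|]. lra. apply Rlt_le, exp_increasing.
      apply Rabs_le_between in Hu. lra. }
    assert (La ^ k <= q u ^ k). { apply pow_incr. split. unfold La. pose proof (pow2_ge_0 rho); lra. apply Hqnear; auto. }
    assert (m <= phi u). { apply Rlt_le, Hnear_phi. lra. }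
    assert (0 <= La ^ k) by (apply pow_le; unfold La; pose proof (pow2_ge_0 rho); lra).
    assert (E0 * La ^ k * m <= exp (- u) * (q u ^ k * phi u)).
    { rewrite Rmult_assoc. apply Rmult_le_compat; try lra. apply Rmult_le_pos; lra.
      apply Rmult_le_compat; lra. }
    pose proof (exp_pos (- u)). pose proof (HB u Hu0'). pose proof (Rabs_pos (phi u)).
    assert (0 <= B * exp (- u)) by (apply Rmult_le_pos; lra). lra. }
  set (a1 := u0 - d3). set (a2 := u0 + d3).
  assert (Ha1 : 0 < a1) by (unfold a1; lra).
  assert (Ha12 : a1 < a2) by (unfold a1, a2; lra).
  assert (Ha2 : a2 < T) by (unfold a2; lra).
  assert (Hex : forall f, (forall u, continuous f u) -> forall a b, ex_RInt f a b) by (intros; apply exRInt_cont; auto).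
  assert (Hsplit : RInt J 0 T = RInt J 0 a1 + RInt J a1 a2 + RInt J a2 T).
  { pose proof (RInt_Chasles (V := R_CompleteNormedModule) J 0 a1 T (Hex J HcJ _ _) (Hex J HcJ _ _)) as C1.
    pose proof (RInt_Chasles (V := R_CompleteNormedModule) J a1 a2 T (Hex J HcJ _ _) (Hex J HcJ _ _)) as C2.
    unfold plus in C1, C2; simpl in C1, C2. rewrite <- C1, <- C2. req. ring. }
  assert (HJ1 : 0 <= RInt J 0 a1).
  { apply RInt_ge_0; auto. lra. intros x Hx. apply HJ0. lra. }
  assert (HJ3 : 0 <= RInt J a2 T).
  { apply RInt_ge_0; auto. lra. intros x Hx. apply HJ0. lra. }
  assert (HJ2 : (a2 - a1) * (E0 * La ^ k * m) <= RInt J a1 a2).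
  { replace ((a2 - a1) * (E0 * La ^ k * m)) with (RInt (fun _ => E0 * La ^ k * m) a1 a2).
    apply RInt_le; auto. lra. apply Hex; intros; apply continuous_const.
    intros x Hx. apply HJnear. apply Rabs_le_between. unfold a1, a2 in Hx. lra.
    rewrite RInt_const. reflexivity. }
  assert (HIJ : RInt I 0 T = RInt J 0 T - B * (1 - exp (- T))).
  { rewrite <- int_expm. unfold J.
    rewrite (RInt_plus (V := R_CompleteNormedModule)); auto.
    rewrite (RInt_ext (fun x => B * exp (- x)) (fun x => scal B (exp (- x)))) by reflexivity.
    rewrite (RInt_scal (V := R_CompleteNormedModule)); auto.
    unfold plus, scal; simpl; unfold mult; simpl.
    unfold Rminus. rewrite Rplus_assoc, Rplus_opp_r, Rplus_0_r. reflexivity.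
    apply Hex. intros; apply contR_mult; auto. apply continuous_const. }
  assert (HaT : a2 - a1 = 2 * d3) by (unfold a1, a2; ring).
  pose proof (exp_pos (- T)).
  rewrite HaT in HJ2.
  assert (B * (1 - exp (- T)) <= B) by nra.
  lra.
Qed.
End Mom.

Lemma lerch h s0 : cont_halfline h ->
  (forall xi, s0 < xi -> is_RInt_gen (fun t => exp (- (xi * t)) * h t) (at_point 0) (Rbar_locally p_infty) 0) ->
  forall t, 0 <= t -> h t = 0.
Proof.
  intros Hh Hl.
  set (a := Rabs s0 + 1).
  assert (Ha : s0 < a) by (unfold a; pose proof (Rle_abs s0); lra).
  set (phi := HH h a).
  assert (Hpc : forall u, continuous phi u) by (intros; apply HH_cont; auto).
  assert (Hlim : is_lim phi p_infty 0).
  { assert (HL := lap_hh h s0 Hh Hl a Ha). exact HL. }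
  assert (HB : exists B, forall u, 0 <= u -> Rabs (phi u) <= B).
  { apply filterlim_locally with (eps := mkposreal 1 Rlt_0_1) in Hlim.
    destruct Hlim as [M HM].
    set (M' := Rmax 0 M + 1).
    destruct (continuity_ab_maj (fun u => Rabs (phi u)) 0 M') as [Mx [HMx _]].
    unfold M'; pose proof (Rmax_l 0 M); lra.
    intros c _. apply (continuity_pt_comp phi Rabs). apply continuity_pt_filterlim, Hpc. apply Rcontinuity_abs.
    exists (Rabs (phi Mx) + 1). intros u Hu.
    destruct (Rle_dec u M'). specialize (HMx u (conj Hu r)). simpl in HMx. lra.
    assert (M < u) by (unfold M' in n; pose proof (Rmax_r 0 M); lra).
    specialize (HM u H). change (Rabs (phi u - 0) < 1) in HM. rewrite Rminus_0_r in HM.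
    pose proof (Rabs_pos (phi Mx)). lra. }
  destruct HB as [B HB].
  assert (Hcl := claimB h s0 Hh Hl). fold a in Hcl.
  assert (Z1 : Zp phi (fun _ => 1)).
  { split. intros; apply continuous_const.
    intros n Hn. apply (is_lim_ext (fun T => RInt (fun u => exp (- (INR n * u)) * HH h a u) 0 T)).
    intros T. apply RInt_ext. intros. req. unfold phi. ring.
    apply Hcl. apply lt_0_INR. lia. }
  assert (Z2 : Zp (fun u => - phi u) (fun _ => 1)).
  { split. intros; apply continuous_const.
    intros n Hn. apply (is_lim_ext (fun T => - RInt (fun u => exp (- (INR n * u)) * HH h a u) 0 T)).
    intros T. rewrite (RInt_ext (fun u => exp (- (INR n * u)) * (1 * - phi u)) (fun u => opp (exp (- (INR n * u)) * HH h a u))).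
    rewrite (RInt_opp (V := R_CompleteNormedModule)). reflexivity.
    apply exRInt_cont; intros; apply contR_mult; [apply cont_expl | apply HH_cont; auto]. intros. req. unfold opp; simpl. unfold phi. ring.
    replace (Finite 0) with (Rbar_opp 0) by (simpl; f_equal; ring).
    apply is_lim_opp. apply Hcl. apply lt_0_INR. lia. }
  assert (Hz : forall u, 0 < u -> phi u = 0).
  { intros u Hu.
    pose proof (mom_main phi Hpc B u HB Z1 Hu).
    assert (Hc2 : forall u, continuous (fun u => - phi u) u).
    { intros v. apply (continuous_opp (V := R_NormedModule) phi). auto. }
    pose proof (mom_main (fun u => - phi u) Hc2 B u) as H2.
    assert (- phi u <= 0). apply H2; auto. intros v Hv. rewrite Rabs_Ropp. auto. lra. }
  assert (Hpos : forall u, 0 < u -> h u = 0).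
  { intros u Hu. assert (HD := HH_derive h a Hh u).
    assert (HD0 : is_derive (fun _ : R => 0) u (gfun h a u)).
    { apply (is_derive_ext_loc phi). exists (mkposreal (u / 2) ltac:(lra)). intros v Hv.
      change (Rabs (v - u) < u / 2) in Hv. apply Rabs_lt_between in Hv. apply Hz. lra. exact HD. }
    assert (HD1 : is_derive (fun _ : R => 0) u 0) by (apply (is_derive_const 0 u)).
    pose proof (is_derive_unique _ _ _ HD0) as E1. pose proof (is_derive_unique _ _ _ HD1) as E2.
    rewrite E1 in E2. unfold gfun, ext0 in E2. rewrite Rmax_right in E2 by lra.
    apply Rmult_integral in E2. destruct E2 as [E|E]; auto. pose proof (exp_pos (- (a * u))). lra. }
  intros t Ht. destruct (Req_dec t 0) as [->|Hne]; [|apply Hpos; lra].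
  destruct (Req_dec (h 0) 0) as [|Hn]; auto. exfalso.
  destruct (Hh 0 (Rle_refl 0) (Rabs (h 0)) ltac:(apply Rabs_pos_lt; auto)) as [d [Hd Hd']].
  specialize (Hd' (d / 2) ltac:(lra) ltac:(rewrite Rminus_0_r, Rabs_right; lra)).
  rewrite Hpos in Hd' by lra. rewrite Rminus_0_l, Rabs_Ropp in Hd'. lra.
Qed.

Lemma es_cont w t : continuous (es w) t.
Proof. apply (ex_derive_continuous (V := R_NormedModule)). eexists. apply es_derive. Qed.

Lemma cont_halfline_minus f g : cont_halfline f -> (forall t, continuous g t) -> cont_halfline (fun t => f t - g t).
Proof.
  intros Hf Hg t Ht eps He.
  destruct (Hf t Ht (eps / 2) ltac:(lra)) as [d1 [Hd1 H1]].
  destruct (cont_eps g t (Hg t) (eps / 2) ltac:(lra)) as [d2 [Hd2 H2]].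
  exists (Rmin d1 d2). split. apply Rmin_pos; auto.
  intros s Hs Hst. specialize (H1 s Hs ltac:(pose proof (Rmin_l d1 d2); lra)).
  specialize (H2 s ltac:(pose proof (Rmin_r d1 d2); lra)).
  replace (f s - g s - (f t - g t)) with ((f s - f t) - (g s - g t)) by ring.
  pose proof (Rabs_triang (f s - f t) (- (g s - g t))). rewrite Rabs_Ropp in H. unfold Rminus at 1. lra.
Qed.

Lemma identify (F : R -> R) (w : nat -> R) (f : R -> R) :
  (forall xi, 0 < xi -> lap w xi = F xi) -> inv_laplace F f -> forall t, 0 <= t -> f t = es w t.
Proof.
  intros HF [Hc [s0 Hl]] t Ht.
  assert (E := lerch (fun t => f t - es w t) (Rmax s0 0)
    (cont_halfline_minus f (es w) Hc (es_cont w))).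
  enough (f t - es w t = 0) by lra. apply E; auto.
  intros xi Hxi.
  assert (H1 : s0 < xi) by (pose proof (Rmax_l s0 0); lra).
  assert (H2 : 0 < xi) by (pose proof (Rmax_r s0 0); lra).
  assert (HM := is_RInt_gen_minus (V := R_NormedModule) (Fa := at_point 0) (Fb := Rbar_locally p_infty)
     _ _ _ _ (Hl xi H1) (es_laplace w xi H2)).
  rewrite HF in HM by auto.
  match type of HM with is_RInt_gen _ _ _ ?v => replace v with 0 in HM by (unfold minus, plus, opp; simpl; ring) end.
  eapply is_RInt_gen_ext; [|exact HM].
  apply filter_forall. intros _ x _. unfold minus, plus, opp; simpl. ring.
Qed.

Lemma identify_cd (cr dr : nat -> R -> R) :
  (forall j : nat, (1 <= j <= M)%nat ->
     inv_laplace (fun xi => c j xi / d 0 xi) (cr j) /\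
     inv_laplace (fun xi => d j xi / d 0 xi) (dr j)) ->
  forall j, (1 <= j <= 25)%nat -> forall t, 0 <= t -> cr j t = es (vc j) t /\ dr j t = es (vd j) t.
Proof.
  intros Hyp j Hj t Ht. destruct j as [|k]; [lia|].
  destruct (Hyp (S k) Hj) as [Hc Hd].
  split.
  - apply (identify _ _ _ (fun xi Hxi => proj1 (vcd_lap k xi ltac:(lia) Hxi)) Hc t Ht).
  - apply (identify _ _ _ (fun xi Hxi => proj2 (vcd_lap k xi ltac:(lia) Hxi)) Hd t Ht).
Qed.

Lemma part2 (cr dr : nat -> R -> R) :
  (forall j : nat, (1 <= j <= M)%nat ->
     inv_laplace (fun xi => c j xi / d 0 xi) (cr j) /\
     inv_laplace (fun xi => d j xi / d 0 xi) (dr j)) ->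
  forall t : R, 0 <= t -> 0 <= P_M cr dr t - Q_M dr t.
Proof.
  intros Hyp t Ht. destruct (identify_cd cr dr Hyp 25 ltac:(lia) t Ht) as [E1 E2].
  unfold P_M, Q_M. unfold M. rewrite E1, E2.
  replace (INR 25) with 25 by (simpl; ring).
  pose proof (PQ_es_nonneg t Ht). lra.
Qed.

Lemma deriv_sign f tau l : is_derive f tau l -> f tau = 0 -> 0 < tau ->
  (forall r, 0 <= r < tau -> 0 < f r) -> l <= 0.
Proof.
  intros Hd H0 Ht Hp. apply is_derive_Reals in Hd.
  destruct (Rle_dec l 0) as [|Hl]; auto. apply Rnot_le_lt in Hl. exfalso.
  destruct (Hd l Hl) as [dl Hdl].
  set (h := - Rmin (dl / 2) (tau / 2)).
  assert (Hh1 : 0 < Rmin (dl / 2) (tau / 2)) by (apply Rmin_pos; [pose proof (cond_pos dl)|]; lra).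
  assert (Hh2 : Rmin (dl / 2) (tau / 2) <= dl / 2) by apply Rmin_l.
  assert (Hh3 : Rmin (dl / 2) (tau / 2) <= tau / 2) by apply Rmin_r.
  specialize (Hdl h ltac:(unfold h; lra) ltac:(unfold h; rewrite Rabs_Ropp, Rabs_right; pose proof (cond_pos dl); lra)).
  rewrite H0, Rminus_0_r in Hdl.
  assert (Hf : 0 < f (tau + h)) by (apply Hp; unfold h; lra).
  assert (f (tau + h) / h < 0).
  { unfold Rdiv. apply Rmult_pos_neg; auto. apply Rinv_lt_0_compat. unfold h; lra. }
  apply Rabs_lt_between in Hdl. lra.
Qed.

Lemma cont_at_pos f t : cont_halfline f -> 0 <= t -> 0 < f t ->
  exists d, 0 < d /\ forall s, 0 <= s -> Rabs (s - t) < d -> 0 < f s.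
Proof.
  intros Hf Ht Hp. destruct (Hf t Ht (f t) Hp) as [d [Hd H]]. exists d; split; auto.
  intros s Hs Hst. specialize (H s Hs Hst). apply Rabs_lt_between in H. lra.
Qed.

Lemma cont_halfline_ext f g : cont_halfline f -> (forall t, f t = g t) -> cont_halfline g.
Proof. intros H E t Ht eps He. destruct (H t Ht eps He) as [d [Hd H']]. exists d; split; auto.
  intros s Hs Hst. rewrite <- !E. auto. Qed.

Lemma coop (A Bt X S1 S2 : R -> R) :
  cont_halfline A -> cont_halfline Bt -> A 0 = 0 -> Bt 0 = 0 ->
  (forall s, 0 < s -> is_derive A s (-10 * A s + 10 * X s * Bt s + S1 s) /\
                      is_derive Bt s (-13 * Bt s + 13 * A s + S2 s)) ->
  (forall s, 0 < s -> 0 <= X s <= 1 /\ 0 <= S1 s /\ 0 <= S2 s) ->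
  forall s, 0 <= s -> 0 <= A s /\ 0 <= Bt s.
Proof.
  intros HcA HcB HA0 HB0 Hder Hpos.
  assert (Main : forall eps, 0 < eps -> forall s1, 0 <= s1 ->
            0 < A s1 + eps * exp s1 /\ 0 < Bt s1 + eps * exp s1).
  { intros eps He s1 Hs1.
    set (U := fun s => A s + eps * exp s). set (V := fun s => Bt s + eps * exp s).
    assert (Hce : forall t, continuous (fun s => - (eps * exp s)) t).
    { intros t. apply (ex_derive_continuous (V := R_NormedModule)). auto_derive; auto. }
    assert (HcU : cont_halfline U).
    { apply (cont_halfline_ext _ _ (cont_halfline_minus A _ HcA Hce)). intros; unfold U; ring. }
    assert (HcV : cont_halfline V).
    { apply (cont_halfline_ext _ _ (cont_halfline_minus Bt _ HcB Hce)). intros; unfold V; ring. }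
    assert (HU0 : U 0 = eps) by (unfold U; rewrite HA0, exp_0; ring).
    assert (HV0 : V 0 = eps) by (unfold V; rewrite HB0, exp_0; ring).
    assert (Hdec : {0 < U s1 /\ 0 < V s1} + {~ (0 < U s1 /\ 0 < V s1)}).
    { destruct (Rlt_dec 0 (U s1)), (Rlt_dec 0 (V s1)); [left; split; auto | right; tauto.. ]. }
    destruct Hdec as [Hok|Hfail]; [exact Hok|exfalso].
    set (E := fun r => 0 <= r <= s1 /\ forall r', 0 <= r' <= r -> 0 < U r' /\ 0 < V r').
    assert (HE0 : E 0).
    { split; [lra|]. intros r' Hr'. replace r' with 0 by lra. rewrite HU0, HV0; lra. }
    assert (Hbd : bound E) by (exists s1; intros r [Hr _]; lra).
    destruct (completeness E Hbd (ex_intro _ 0 HE0)) as [tau [Hub Hlub]].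
    assert (Htau0 : 0 <= tau) by (apply Hub; auto).
    assert (Htau1 : tau <= s1) by (apply Hlub; intros r [Hr _]; lra).
    assert (Ha : forall r, 0 <= r < tau -> 0 < U r /\ 0 < V r).
    { intros r Hr. destruct (Rlt_dec 0 (U r)), (Rlt_dec 0 (V r)); try (split; assumption); exfalso.
      all: assert (Hrub : is_upper_bound E r);
      [ intros e [He1 He2]; destruct (Rle_dec e r); auto; exfalso;
        destruct (He2 r ltac:(lra)); tauto
      | specialize (Hlub r Hrub); lra ]. }
    assert (HUt : 0 <= U tau).
    { destruct (Rle_dec 0 (U tau)) as [|Hn]; auto. exfalso. apply Rnot_le_lt in Hn.
      destruct (Req_dec tau 0) as [Ht0|Ht0]; [rewrite Ht0, HU0 in Hn; lra|].
      destruct (HcU tau Htau0 (- U tau) ltac:(lra)) as [d [Hd Hd']].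
      assert (Hr0 : Rmax 0 (tau - d / 2) < tau) by (apply Rmax_lub_lt; lra).
      pose proof (Rmax_r 0 (tau - d/2)). pose proof (Rmax_l 0 (tau - d/2)).
      set (r := Rmax 0 (tau - d / 2)) in *.
      assert (Hr : 0 <= r < tau) by lra.
      assert (Hrd : Rabs (r - tau) < d) by (rewrite Rabs_left1 by lra; lra).
      specialize (Hd' r (proj1 Hr) Hrd). destruct (Ha r Hr). apply Rabs_lt_between in Hd'. lra. }
    assert (HVt : 0 <= V tau).
    { destruct (Rle_dec 0 (V tau)) as [|Hn]; auto. exfalso. apply Rnot_le_lt in Hn.
      destruct (Req_dec tau 0) as [Ht0|Ht0]; [rewrite Ht0, HV0 in Hn; lra|].
      destruct (HcV tau Htau0 (- V tau) ltac:(lra)) as [d [Hd Hd']].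
      assert (Hr0 : Rmax 0 (tau - d / 2) < tau) by (apply Rmax_lub_lt; lra).
      pose proof (Rmax_r 0 (tau - d/2)). pose proof (Rmax_l 0 (tau - d/2)).
      set (r := Rmax 0 (tau - d / 2)) in *.
      assert (Hr : 0 <= r < tau) by lra.
      assert (Hrd : Rabs (r - tau) < d) by (rewrite Rabs_left1 by lra; lra).
      specialize (Hd' r (proj1 Hr) Hrd). destruct (Ha r Hr). apply Rabs_lt_between in Hd'. lra. }
    assert (Hd : ~ (0 < U tau /\ 0 < V tau)).
    { intros [Hu Hv].
      destruct (cont_at_pos U tau HcU Htau0 Hu) as [d1 [Hd1 Hd1']].
      destruct (cont_at_pos V tau HcV Htau0 Hv) as [d2 [Hd2 Hd2']].
      destruct (Req_dec tau s1) as [Heq|Hne]; [subst tau; tauto|].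
      assert (Hm : 0 < Rmin d1 d2) by (apply Rmin_pos; auto).
      pose proof (Rmin_l d1 d2). pose proof (Rmin_r d1 d2).
      assert (Hs : tau < Rmin (tau + Rmin d1 d2 / 2) s1) by (apply Rmin_glb_lt; lra).
      pose proof (Rmin_l (tau + Rmin d1 d2 / 2) s1). pose proof (Rmin_r (tau + Rmin d1 d2 / 2) s1).
      set (s := Rmin (tau + Rmin d1 d2 / 2) s1) in *.
      assert (HEs : E s).
      { split; [split; lra|].
        intros r' Hr'. destruct (Rlt_dec r' tau); [apply Ha; lra|].
        assert (Rabs (r' - tau) < Rmin d1 d2) by (rewrite Rabs_right by lra; lra).
        split; [apply Hd1' | apply Hd2']; lra. }
      specialize (Hub s HEs). lra. }
    assert (Htp : 0 < tau).
    { destruct (Req_dec tau 0) as [Ht0|]; [|lra]. exfalso. apply Hd. rewrite Ht0, HU0, HV0. lra. }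
    destruct (Hder tau Htp) as [HdA HdB].
    destruct (Hpos tau Htp) as [[HX0 HX1] [HS1 HS2]].
    pose proof (exp_pos tau) as Hexp.
    assert (HepsE : 0 < eps * exp tau) by (apply Rmult_lt_0_compat; lra).
    destruct (Req_dec (U tau) 0) as [HU|HU].
    + assert (HdU : is_derive U tau ((-10 * A tau + 10 * X tau * Bt tau + S1 tau) + eps * exp tau)).
      { apply (is_derive_plus (V := R_NormedModule) A (fun s => eps * exp s)); auto. auto_derive; auto; ring. }
      pose proof (deriv_sign U tau _ HdU HU Htp (fun r Hr => proj1 (Ha r Hr))).
      unfold U in HU. unfold V in HVt.
      assert (0 <= X tau * (Bt tau + eps * exp tau)) by (apply Rmult_le_pos; lra).
      assert (X tau * (eps * exp tau) <= eps * exp tau).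
      { rewrite <- (Rmult_1_l (eps * exp tau)) at 2. apply Rmult_le_compat_r; lra. }
      nra.
    + assert (HV : V tau = 0).
      { destruct (Rlt_dec 0 (U tau)), (Rlt_dec 0 (V tau)); try tauto; lra. }
      assert (HdV : is_derive V tau ((-13 * Bt tau + 13 * A tau + S2 tau) + eps * exp tau)).
      { apply (is_derive_plus (V := R_NormedModule) Bt (fun s => eps * exp s)); auto. auto_derive; auto; ring. }
      pose proof (deriv_sign V tau _ HdV HV Htp (fun r Hr => proj2 (Ha r Hr))).
      unfold V in HV. unfold U in HUt.
      nra. }
  intros s Hs. split.
  - destruct (Rle_dec 0 (A s)) as [|Hn]; auto. apply Rnot_le_lt in Hn. exfalso.
    pose proof (exp_pos s).
    destruct (Main (- A s / (2 * exp s)) ltac:(apply Rdiv_lt_0_compat; lra) s Hs) as [H1 _].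
    replace (- A s / (2 * exp s) * exp s) with (- A s / 2) in H1 by (field; lra). lra.
  - destruct (Rle_dec 0 (Bt s)) as [|Hn]; auto. apply Rnot_le_lt in Hn. exfalso.
    pose proof (exp_pos s).
    destruct (Main (- Bt s / (2 * exp s)) ltac:(apply Rdiv_lt_0_compat; lra) s Hs) as [_ H1].
    replace (- Bt s / (2 * exp s) * exp s) with (- Bt s / 2) in H1 by (field; lra). lra.
Qed.

Lemma sumN_tele (T : nat -> R) n : sumN (fun i => T i - T (S i)) n = T 0%nat - T n.
Proof. induction n; simpl; [ring|]. rewrite IHn. ring. Qed.

Definition Gam (g0 s : R) := g0 * exp (- (4 * s)).
Definition Xc (g0 s : R) := / (1 + Gam g0 s ^ 2).
Definition EC j s := es (vc j) s.
Definition ED j s := es (vd j) s.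
Definition SC g0 s := sumN (fun i => EC (S i) s * Xc g0 s ^ (S i)) 25.
Definition SD g0 s := sumN (fun i => ED (S i) s * Xc g0 s ^ (S i)) 25.

Lemma Gam_derive g0 s : is_derive (Gam g0) s (- 4 * Gam g0 s).
Proof. unfold Gam. auto_derive; auto. ring. Qed.

Lemma Xc_pos g0 s : 0 < Xc g0 s <= 1.
Proof.
  unfold Xc. pose proof (pow2_ge_0 (Gam g0 s)). split.
  apply Rinv_0_lt_compat; lra. rewrite <- Rinv_1. apply Rinv_le_contravar; lra.
Qed.

Lemma Xc_derive g0 s : is_derive (Xc g0) s (8 * Xc g0 s * (1 - Xc g0 s)).
Proof.
  unfold Xc, Gam. pose proof (pow2_ge_0 (g0 * exp (- (4 * s)))).
  auto_derive. simpl in H. lra.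
  field. simpl in H. lra.
Qed.

Lemma SC_derive g0 s : is_derive (SC g0) s
  (sumN (fun i => (- (8 * INR i + 18) * EC (S i) s + 8 * INR i * EC i s + 10 * ED i s) * Xc g0 s ^ (S i)
                 + EC (S i) s * (INR (S i) * (8 * Xc g0 s * (1 - Xc g0 s)) * Xc g0 s ^ i)) 25).
Proof.
  unfold SC. apply (sumN_derive (fun i s => EC (S i) s * Xc g0 s ^ (S i))
    (fun i s => (- (8 * INR i + 18) * EC (S i) s + 8 * INR i * EC i s + 10 * ED i s) * Xc g0 s ^ (S i)
                 + EC (S i) s * (INR (S i) * (8 * Xc g0 s * (1 - Xc g0 s)) * Xc g0 s ^ i))).
  intros i Hi. apply (derR_mult (EC (S i)) (fun s => Xc g0 s ^ (S i))).
  apply ec_derive; lia. apply (is_derive_pow (Xc g0) (S i)). apply Xc_derive.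
Qed.

Lemma SD_derive g0 s : is_derive (SD g0) s
  (sumN (fun i => (- (8 * INR i + 21) * ED (S i) s + 13 * EC (S i) s + 8 * INR i * ED i s) * Xc g0 s ^ (S i)
                 + ED (S i) s * (INR (S i) * (8 * Xc g0 s * (1 - Xc g0 s)) * Xc g0 s ^ i)) 25).
Proof.
  unfold SD. apply (sumN_derive (fun i s => ED (S i) s * Xc g0 s ^ (S i))
    (fun i s => (- (8 * INR i + 21) * ED (S i) s + 13 * EC (S i) s + 8 * INR i * ED i s) * Xc g0 s ^ (S i)
                 + ED (S i) s * (INR (S i) * (8 * Xc g0 s * (1 - Xc g0 s)) * Xc g0 s ^ i))).
  intros i Hi. apply (derR_mult (ED (S i)) (fun s => Xc g0 s ^ (S i))).
  apply ed_derive; lia. apply (is_derive_pow (Xc g0) (S i)). apply Xc_derive.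
Qed.

Lemma SC_ident g0 s :
  sumN (fun i => (- (8 * INR i + 18) * EC (S i) s + 8 * INR i * EC i s + 10 * ED i s) * Xc g0 s ^ (S i)
                 + EC (S i) s * (INR (S i) * (8 * Xc g0 s * (1 - Xc g0 s)) * Xc g0 s ^ i)) 25
  = - 10 * SC g0 s + 10 * Xc g0 s * SD g0 s - (200 * EC 25 s + 10 * ED 25 s) * Xc g0 s ^ 26.
Proof.
  set (X := Xc g0 s).
  set (T := fun i => (8 * INR i * EC i s + 10 * ED i s) * X ^ (S i)).
  assert (HT0 : T 0%nat = 0) by (unfold T, EC, ED; rewrite ec0, ed0; simpl; ring).
  assert (HT25 : T 25%nat = (200 * EC 25 s + 10 * ED 25 s) * X ^ 26)
    by (unfold T; replace (INR 25) with 25 by (simpl; ring); ring_simplify; reflexivity).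
  transitivity (sumN (fun i => -10 * (EC (S i) s * X ^ S i) + 10 * X * (ED (S i) s * X ^ S i) + (T i - T (S i))) 25).
  - apply sumN_ext; intros i _; unfold T; rewrite S_INR; cbn [pow]; ring.
  - rewrite !sumN_plus, !sumN_scal, sumN_tele, HT0, HT25. unfold SC, SD. fold X. ring.
Qed.

Lemma SD_ident g0 s :
  sumN (fun i => (- (8 * INR i + 21) * ED (S i) s + 13 * EC (S i) s + 8 * INR i * ED i s) * Xc g0 s ^ (S i)
                 + ED (S i) s * (INR (S i) * (8 * Xc g0 s * (1 - Xc g0 s)) * Xc g0 s ^ i)) 25
  = - 13 * SD g0 s + 13 * SC g0 s - (200 * ED 25 s) * Xc g0 s ^ 26.
Proof.
  set (X := Xc g0 s).
  set (T := fun i => (8 * INR i * ED i s) * X ^ (S i)).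
  assert (HT0 : T 0%nat = 0) by (unfold T, ED; rewrite ed0; simpl; ring).
  assert (HT25 : T 25%nat = (200 * ED 25 s) * X ^ 26)
    by (unfold T; replace (INR 25) with 25 by (simpl; ring); ring_simplify; reflexivity).
  transitivity (sumN (fun i => -13 * (ED (S i) s * X ^ S i) + 13 * (EC (S i) s * X ^ S i) + (T i - T (S i))) 25).
  - apply sumN_ext; intros i _; unfold T; rewrite S_INR; cbn [pow]; ring.
  - rewrite !sumN_plus, !sumN_scal, sumN_tele, HT0, HT25. unfold SC, SD. fold X. ring.
Qed.

Lemma sumN_cont (f : nat -> R -> R) n x : (forall i, (i < n)%nat -> continuous (f i) x) ->
  continuous (fun y => sumN (fun i => f i y) n) x.
Proof.
  induction n; intros H; simpl. apply continuous_const.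
  apply (contR_plus (fun y => sumN (fun i => f i y) n) (f n)). apply IHn; intros; apply H; lia. apply H; lia.
Qed.

Lemma SC_cont g0 s : continuous (SC g0) s.
Proof. apply (ex_derive_continuous (V := R_NormedModule)). eexists. apply SC_derive. Qed.
Lemma SD_cont g0 s : continuous (SD g0) s.
Proof. apply (ex_derive_continuous (V := R_NormedModule)). eexists. apply SD_derive. Qed.

Lemma path_cont (w : R -> R -> R) g0 : cont_quadrant w -> 0 <= g0 -> cont_halfline (fun s => w s (Gam g0 s)).
Proof.
  intros Hw Hg t Ht eps He.
  assert (HG : forall s, 0 <= Gam g0 s) by (intros; unfold Gam; apply Rmult_le_pos; [lra|apply Rlt_le, exp_pos]).
  destruct (Hw t (Gam g0 t) Ht (HG t) eps He) as [d [Hd H]].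
  assert (Hc : continuous (Gam g0) t) by (apply (ex_derive_continuous (V := R_NormedModule)); eexists; apply Gam_derive).
  destruct (cont_eps (Gam g0) t Hc d Hd) as [d2 [Hd2 H2]].
  exists (Rmin d d2). split. apply Rmin_pos; auto.
  intros s Hs Hst. apply H; auto. pose proof (Rmin_l d d2); lra. apply H2. pose proof (Rmin_r d d2); lra.
Qed.

Lemma Gam_0 g0 : Gam g0 0 = g0.
Proof. unfold Gam. rewrite Rmult_0_r, Ropp_0, exp_0. ring. Qed.

Lemma char_nonneg w1 w2 g0 : is_w_solution w1 w2 -> 0 < g0 ->
  forall s, 0 <= s -> 0 <= w2 s (Gam g0 s) - SD g0 s.
Proof.
  intros [Hc1 [Hc2 [Hinit Hpde]]] Hg0.
  set (Af := fun s => w1 s (Gam g0 s) + 10 * exp (- (23 * s)) - SC g0 s).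
  set (Bf := fun s => w2 s (Gam g0 s) - SD g0 s).
  assert (HG : forall s, 0 < Gam g0 s) by (intros; unfold Gam; apply Rmult_lt_0_compat; [lra|apply exp_pos]).
  enough (H : forall s, 0 <= s -> 0 <= Af s /\ 0 <= Bf s) by (intros s Hs; apply (H s Hs)).
  apply (coop Af Bf (Xc g0) (fun s => (200 * EC 25 s + 10 * ED 25 s) * Xc g0 s ^ 26)
                            (fun s => (200 * ED 25 s) * Xc g0 s ^ 26)).
  - assert (Hcg : forall t, continuous (fun s => SC g0 s - 10 * exp (- (23 * s))) t).
    { intros t. apply (continuous_minus (V := R_NormedModule) (SC g0)). apply SC_cont.
      apply (ex_derive_continuous (V := R_NormedModule)). auto_derive; auto. }
    apply (cont_halfline_ext _ _ (cont_halfline_minus _ (fun s => SC g0 s - 10 * exp (- (23 * s)))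
             (path_cont w1 g0 Hc1 ltac:(lra)) Hcg)).
    intros; unfold Af; ring.
  - apply (cont_halfline_ext _ _ (cont_halfline_minus _ (SD g0) (path_cont w2 g0 Hc2 ltac:(lra)) (SD_cont g0))).
    intros; unfold Bf; ring.
  - unfold Af. rewrite Gam_0. destruct (Hinit g0 ltac:(lra)) as [E1 _]. rewrite E1.
    assert (HS : SC g0 0 = 10 * Xc g0 0).
    { unfold SC. rewrite (sumN_ext _ (fun i => if Nat.eqb i 0 then 10 * Xc g0 0 else 0)).
      apply sumN_ind; lia. intros i Hi. unfold EC. rewrite ec_init by lia.
      destruct (Nat.eqb_spec i 0) as [->|]; simpl; ring. }
    rewrite HS. unfold Xc. rewrite Gam_0. rewrite Rmult_0_r, Ropp_0, exp_0.
    pose proof (pow2_ge_0 g0). field. lra.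
  - unfold Bf. rewrite Gam_0. destruct (Hinit g0 ltac:(lra)) as [_ E2]. rewrite E2.
    unfold SD. rewrite (sumN_ext _ (fun _ => 0)). rewrite sumN_zero; ring.
    intros i Hi. unfold ED. rewrite ed_init by lia. ring.
  - intros s Hs. destruct (Hpde s (Gam g0 s) Hs (HG s)) as [a1 [b1 [a2 [b2 [D1 [D2 [P1 P2]]]]]]].
    assert (Hp1 : is_derive (fun s => w1 s (Gam g0 s)) s (a1 * 1 + b1 * (- 4 * Gam g0 s))).
    { apply is_derive_Reals. apply (derivable_pt_lim_comp_2d w1 (fun s => s) (Gam g0)); auto.
      apply derivable_pt_lim_id. apply is_derive_Reals, Gam_derive. }
    assert (Hp2 : is_derive (fun s => w2 s (Gam g0 s)) s (a2 * 1 + b2 * (- 4 * Gam g0 s))).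
    { apply is_derive_Reals. apply (derivable_pt_lim_comp_2d w2 (fun s => s) (Gam g0)); auto.
      apply derivable_pt_lim_id. apply is_derive_Reals, Gam_derive. }
    assert (HX : 10 / (1 + Gam g0 s ^ 2) = 10 * Xc g0 s) by (unfold Xc; unfold Rdiv; ring).
    split.
    + assert (HA : is_derive Af s ((a1 * 1 + b1 * (- 4 * Gam g0 s)) + (-230 * exp (- (23 * s))) -
          (- 10 * SC g0 s + 10 * Xc g0 s * SD g0 s - (200 * EC 25 s + 10 * ED 25 s) * Xc g0 s ^ 26))).
      { apply (is_derive_minus (V := R_NormedModule) (fun s => w1 s (Gam g0 s) + 10 * exp (- (23 * s))) (SC g0)).
        apply (is_derive_plus (V := R_NormedModule) (fun s => w1 s (Gam g0 s)) (fun s => 10 * exp (- (23 * s)))); auto.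
        auto_derive; auto; ring.
        rewrite <- SC_ident. apply SC_derive. }
      eapply is_derive_ext; [intros; reflexivity|].
      replace (-10 * Af s + 10 * Xc g0 s * Bf s + (200 * EC 25 s + 10 * ED 25 s) * Xc g0 s ^ 26)
        with ((a1 * 1 + b1 * (- 4 * Gam g0 s)) + (-230 * exp (- (23 * s))) -
          (- 10 * SC g0 s + 10 * Xc g0 s * SD g0 s - (200 * EC 25 s + 10 * ED 25 s) * Xc g0 s ^ 26)).
      exact HA.
      unfold Af, Bf. rewrite HX in P1. lra.
    + assert (HB : is_derive Bf s ((a2 * 1 + b2 * (- 4 * Gam g0 s)) -
          (- 13 * SD g0 s + 13 * SC g0 s - (200 * ED 25 s) * Xc g0 s ^ 26))).
      { apply (is_derive_minus (V := R_NormedModule) (fun s => w2 s (Gam g0 s)) (SD g0)); auto.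
        rewrite <- SD_ident. apply SD_derive. }
      eapply is_derive_ext; [intros; reflexivity|].
      replace (-13 * Bf s + 13 * Af s + 200 * ED 25 s * Xc g0 s ^ 26)
        with ((a2 * 1 + b2 * (- 4 * Gam g0 s)) -
          (- 13 * SD g0 s + 13 * SC g0 s - (200 * ED 25 s) * Xc g0 s ^ 26)).
      exact HB.
      unfold Af, Bf. lra.
  - intros s Hs. pose proof (Xc_pos g0 s). split; [lra|].
    pose proof (PQ_es_nonneg s ltac:(lra)). pose proof (d25_es_nonneg s ltac:(lra)).
    assert (0 <= Xc g0 s ^ 26) by (apply pow_le; lra).
    unfold EC, ED. split; apply Rmult_le_pos; lra.
Qed.

Lemma sum_f_R0_sumN f n : sum_f_R0 f n = sumN f (S n).
Proof. induction n; simpl; [ring|]. rewrite IHn. simpl. ring. Qed.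

Lemma sum_f_conv (f : nat -> R) : sum_f 1 M f = sumN (fun i => f (S i)) 25.
Proof.
  unfold sum_f, M. simpl (25 - 1)%nat. rewrite sum_f_R0_sumN. apply sumN_ext. intros i _.
  f_equal. lia.
Qed.

Definition SDt t g := sumN (fun i => ED (S i) t / (1 + g ^ 2) ^ (S i)) 25.

Lemma SDt_cont t g : continuous (SDt t) g.
Proof.
  unfold SDt. apply (sumN_cont (fun i g => ED (S i) t / (1 + g ^ 2) ^ (S i))).
  intros i _. apply (ex_derive_continuous (V := R_NormedModule)). auto_derive.
  pose proof (pow2_ge_0 g). simpl in H.
  assert (0 < 1 + g * (g * 1)) by lra. apply Rmult_integral_contrapositive. split. lra.
  apply pow_nonzero. lra.
Qed.

Lemma part1 (cr dr : nat -> R -> R) (w1 w2 : R -> R -> R) :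
  (forall j : nat, (1 <= j <= M)%nat ->
     inv_laplace (fun xi => c j xi / d 0 xi) (cr j) /\
     inv_laplace (fun xi => d j xi / d 0 xi) (dr j)) ->
  is_w_solution w1 w2 ->
  forall t g : R, 0 <= t -> 0 <= g -> 0 <= beta w2 dr t g.
Proof.
  intros Hyp Hw t g Ht Hg.
  assert (Hb : forall h, beta w2 dr t h = w2 t h - SDt t h).
  { intros h. unfold beta. rewrite sum_f_conv. unfold SDt. f_equal. apply sumN_ext. intros i Hi.
    destruct (identify_cd cr dr Hyp (S i) ltac:(lia) t Ht) as [_ E]. rewrite E. reflexivity. }
  assert (Hpos : forall h, 0 < h -> 0 <= w2 t h - SDt t h).
  { intros h Hh. set (g0 := h * exp (4 * t)).
    assert (HG : Gam g0 t = h).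
    { unfold Gam, g0. rewrite Rmult_assoc, <- exp_plus. replace (4 * t + - (4 * t)) with 0 by ring.
      rewrite exp_0. ring. }
    pose proof (char_nonneg w1 w2 g0 Hw ltac:(unfold g0; apply Rmult_lt_0_compat; [lra|apply exp_pos]) t Ht) as H.
    rewrite HG in H. replace (SDt t h) with (SD g0 t). exact H.
    unfold SD, SDt. apply sumN_ext. intros i _. unfold Xc. rewrite HG, pow_inv. reflexivity. }
  rewrite Hb. destruct (Req_dec g 0) as [->|Hne]; [|apply Hpos; lra].
  destruct (Rle_dec 0 (w2 t 0 - SDt t 0)) as [|Hn]; auto. exfalso. apply Rnot_le_lt in Hn.
  set (eps := - (w2 t 0 - SDt t 0) / 2).
  destruct Hw as [_ [Hc2 _]].
  destruct (Hc2 t 0 Ht (Rle_refl 0) eps ltac:(unfold eps; lra)) as [d1 [Hd1 H1]].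
  destruct (cont_eps (SDt t) 0 (SDt_cont t 0) eps ltac:(unfold eps; lra)) as [d2 [Hd2 H2]].
  set (h := Rmin d1 d2 / 2).
  assert (Hh : 0 < h) by (unfold h; pose proof (Rmin_pos d1 d2 Hd1 Hd2); lra).
  assert (Hh1 : h < d1) by (unfold h; pose proof (Rmin_l d1 d2); pose proof (Rmin_pos d1 d2 Hd1 Hd2); lra).
  assert (Hh2 : h < d2) by (unfold h; pose proof (Rmin_r d1 d2); pose proof (Rmin_pos d1 d2 Hd1 Hd2); lra).
  specialize (H1 t h Ht ltac:(lra) ltac:(rewrite Rminus_diag, Rabs_R0; lra) ltac:(rewrite Rminus_0_r, Rabs_right; lra)).
  specialize (H2 h ltac:(rewrite Rminus_0_r, Rabs_right; lra)).
  pose proof (Hpos h Hh).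
  apply Rabs_lt_between in H1. apply Rabs_lt_between in H2. unfold eps in *. lra.
Qed.


Theorem lemma2p4 (cr dr : nat -> R -> R) (w1 w2 : R -> R -> R) :
  (forall j : nat, (1 <= j <= M)%nat ->
     inv_laplace (fun xi => c j xi / d 0 xi) (cr j) /\
     inv_laplace (fun xi => d j xi / d 0 xi) (dr j)) ->
  is_w_solution w1 w2 ->
  (forall t g : R, 0 <= t -> 0 <= g -> 0 <= beta w2 dr t g) /\
  (forall t : R, 0 <= t -> 0 <= P_M cr dr t - Q_M dr t).
Proof.
  intros Hyp Hw. split.
  - exact (part1 cr dr w1 w2 Hyp Hw).
  - exact (part2 cr dr Hyp).
Qed.
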